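(* Let $d\ge 1$, $\gamma>0$, and let $f_I\in C^1(\mathbb{R}^d)\cap L^\infty(\mathbb{R}^d)$ be nonnegative, not identically zero, radially symmetric and radially non-increasing (i.e. $f_I(x)=\tilde f_I(|x|)$ with $\tilde f_I$ non-increasing on $[0,\infty)$). Set $t^*=\bigl(\gamma d\,\max f_I^\gamma\bigr)^{-1}$. Then there exists a classical solution $\rho\in C^1(\mathbb{R}^d\times[0,t^* ))$ of $$\partial_t\rho-(1+\gamma)\rho^{\gamma}\,x\cdot\nabla\rho=d\,\rho^{1+\gamma},\qquad \rho(x,0)=f_I(x),$$ (equivalently of $\partial_t\rho-\nabla\cdot(x\rho^{1+\gamma})=0$), given along characteristics by $\rho\bigl(x_0(1-\gamma d f_I^\gamma(x_0)t)^{(1+\gamma)/(\gamma d)},t\bigr)=f_I(x_0)\,(1-\gamma d f_I^\gamma(x_0)t)^{-1/\gamma}$, and this solution blows up at the origin at time $t^*$: $$\lim_{(x,t)\to(0,t^* )}\rho(x,t)=+\infty .$$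
   Context: The parameter $\gamma>0$ is fixed. This concerns the equation $\partial_t\rho-\nabla\cdot(x\rho^{1+\gamma})=0$ on $\mathbb{R}^d\times[0,\infty)$, written in non-conservative form for smooth solutions. *)

(* Defs.v *)
From Stdlib Require Import Reals Lra Arith.
Open Scope R_scope.

(* Points of R^d are represented as functions nat -> R; only the
   coordinates i < d are meaningful (all notions below only look at them). *)
Definition vec := nat -> R.

Fixpoint sumR (d : nat) (f : nat -> R) : R :=
  match d with
  | O => 0
  | S k => sumR k f + f k
  end.

Definition dot (d : nat) (x y : vec) : R := sumR d (fun i => x i * y i).
Definition normd (d : nat) (x : vec) : R := sqrt (dot d x x).
Definition vsub (x y : vec) : vec := fun i => x i - y i.
Definition vscal (c : R) (x : vec) : vec := fun i => c * x i.

Definition upd (x : vec) (i : nat) (h : R) : vec :=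
  fun j => if Nat.eqb j i then x j + h else x j.

(* real power with the convention 0^a = 0 (used for a > 0 only) *)
Definition rpow (x a : R) : R :=
  if Rlt_dec 0 x then Rpower x a else 0.

Definition cont_Rd (d : nat) (F : vec -> R) (x : vec) : Prop :=
  forall eps, 0 < eps -> exists delta, 0 < delta /\
    forall y, normd d (vsub y x) < delta -> Rabs (F y - F x) < eps.

Definition C1_Rd (d : nat) (F : vec -> R) : Prop :=
  exists DF : nat -> vec -> R,
    (forall x, cont_Rd d F x) /\
    (forall i, (i < d)%nat -> forall x,
        derivable_pt_lim (fun h => F (upd x i h)) 0 (DF i x) /\
        cont_Rd d (DF i) x).

Definition cont_strip (d : nat) (T : R) (G : vec -> R -> R) (x : vec) (t : R) : Prop :=
  forall eps, 0 < eps -> exists delta, 0 < delta /\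
    forall y s, 0 <= s < T -> normd d (vsub y x) < delta -> Rabs (s - t) < delta ->
      Rabs (G y s - G x t) < eps.

Definition C1_strip (d : nat) (T : R) (rho rho_t : vec -> R -> R)
    (rho_x : nat -> vec -> R -> R) : Prop :=
  (forall x t, 0 <= t < T ->
     cont_strip d T rho x t /\ cont_strip d T rho_t x t /\
     (forall i, (i < d)%nat -> cont_strip d T (rho_x i) x t)) /\
  (forall x t, 0 < t < T -> derivable_pt_lim (fun s => rho x s) t (rho_t x t)) /\
  (forall x t i, 0 <= t < T -> (i < d)%nat ->
     derivable_pt_lim (fun h => rho (upd x i h) t) 0 (rho_x i x t)).

(* Main.v *)
Require Import Defs.
From Stdlib Require Import Reals Lra Lia.
From Stdlib Require Import ClassicalEpsilon FunctionalExtensionality.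
Open Scope R_scope.

Definition cnt1 (f : R -> R) (x : R) : Prop :=
  forall eps, 0 < eps -> exists del, 0 < del /\
    forall y, Rabs (y - x) < del -> Rabs (f y - f x) < eps.

Lemma cnt1_of_pt f x : continuity_pt f x -> cnt1 f x.
Proof.
  intros H eps He. destruct (H eps He) as [al [Hal Hf]].
  exists al; split; [lra|]. intros y Hy.
  destruct (Req_dec y x) as [->|Hne].
  - rewrite Rminus_diag, Rabs_R0; lra.
  - apply (Hf y). split; [split; [exact I| auto] | exact Hy].
Qed.

Lemma cnt1_of_derive f x l : derivable_pt_lim f x l -> cnt1 f x.
Proof.
  intro H. apply cnt1_of_pt. apply derivable_continuous_pt.
  exists l. exact H.
Qed.

Lemma cnt1_ext f g x : (forall y, f y = g y) -> cnt1 f x -> cnt1 g x.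
Proof. intros E H eps He. destruct (H eps He) as [d [Hd Hf]]. exists d; split; auto.
  intros y Hy. rewrite <- !E. auto. Qed.

Lemma cnt1_inv x : x <> 0 -> cnt1 Rinv x.
Proof.
  intro Hx. apply cnt1_of_pt.
  apply (continuity_pt_inv (fun y => y) x); auto. apply derivable_continuous_pt. exists 1. apply derivable_pt_lim_id.
Qed.

Lemma derive_local f g x l :
  (exists del, 0 < del /\ forall y, Rabs (y - x) < del -> f y = g y) ->
  derivable_pt_lim f x l -> derivable_pt_lim g x l.
Proof.
  intros [del [Hdel E]] H eps He. destruct (H eps He) as [d Hd].
  assert (Hm : 0 < Rmin d del) by (apply Rmin_pos; [apply cond_pos| lra]).
  exists (mkposreal _ Hm). intros h Hh0 Hh. simpl in Hh.
  rewrite <- (E (x+h)), <- (E x).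
  - apply Hd; auto. apply Rlt_le_trans with (1:=Hh), Rmin_l.
  - rewrite Rminus_diag, Rabs_R0; lra.
  - replace (x + h - x) with h by ring. apply Rlt_le_trans with (1:=Hh), Rmin_r.
Qed.

Lemma derive_ext f g x l : (forall y, f y = g y) ->
  derivable_pt_lim f x l -> derivable_pt_lim g x l.
Proof. intros E. apply derive_local. exists 1; split; [lra|]. auto. Qed.

Lemma derive_unique_eq f x l1 l2 : derivable_pt_lim f x l1 -> l1 = l2 -> derivable_pt_lim f x l2.
Proof. intros H ->; exact H. Qed.

Lemma derive_sign_right_le f x l del : 0 < del -> derivable_pt_lim f x l ->
  (forall h, 0 < h < del -> f (x + h) <= f x) -> l <= 0.
Proof.
  intros Hdel H Hm. destruct (Rle_lt_dec l 0) as [|Hl]; auto. exfalso.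
  destruct (H l Hl) as [d Hd].
  set (h := Rmin (d/2) (del/2)).
  assert (Hh : 0 < h) by (apply Rmin_pos; generalize (cond_pos d); lra).
  assert (Hh1 : h <= d/2) by apply Rmin_l. assert (Hh2 : h <= del/2) by apply Rmin_r.
  specialize (Hd h ltac:(lra)). rewrite Rabs_pos_eq in Hd by lra.
  specialize (Hd ltac:(generalize (cond_pos d); lra)).
  specialize (Hm h ltac:(lra)).
  assert ((f (x + h) - f x) / h <= 0).
  { unfold Rdiv. assert (0 < / h) by (apply Rinv_0_lt_compat; lra). nra. }
  apply Rabs_def2 in Hd. lra.
Qed.

Lemma derive_sign_right_ge f x l del : 0 < del -> derivable_pt_lim f x l ->
  (forall h, 0 < h < del -> f x <= f (x + h)) -> 0 <= l.
Proof.
  intros Hdel H Hm.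
  assert (H' : derivable_pt_lim (fun y => - f y) x (- l)).
  { apply (derivable_pt_lim_opp f x l H). }
  assert (- l <= 0). { apply (derive_sign_right_le _ x _ del Hdel H'). intros h Hh. specialize (Hm h Hh). lra. }
  lra.
Qed.

Lemma derive_sign_left_le f x l del : 0 < del -> derivable_pt_lim f x l ->
  (forall h, 0 < h < del -> f (x - h) <= f x) -> 0 <= l.
Proof.
  intros Hdel H Hm.
  assert (H' : derivable_pt_lim (fun y => f (- y)) (- x) (l * -1)).
  { apply (derivable_pt_lim_comp (fun y => - y) f (-x) (-1) l).
    - apply derive_unique_eq with (-(1)). apply derivable_pt_lim_opp, derivable_pt_lim_id. ring.
    - rewrite Ropp_involutive. exact H. }
  assert (l * -1 <= 0).
  { apply (derive_sign_right_le _ (-x) _ del Hdel H'). intros h Hh.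
    replace (- (- x + h)) with (x - h) by ring. rewrite Ropp_involutive. auto. }
  lra.
Qed.

Lemma derive_sign_left_ge f x l del : 0 < del -> derivable_pt_lim f x l ->
  (forall h, 0 < h < del -> f x <= f (x - h)) -> l <= 0.
Proof.
  intros Hdel H Hm.
  assert (H' : derivable_pt_lim (fun y => - f y) x (- l)) by apply (derivable_pt_lim_opp f x l H).
  assert (0 <= - l). { apply (derive_sign_left_le _ x _ del Hdel H'). intros h Hh. specialize (Hm h Hh). lra. }
  lra.
Qed.

Definition C2 (T : R) (F : R -> R -> R) (u t : R) : Prop :=
  forall eps, 0 < eps -> exists del, 0 < del /\
    forall u' t', 0 <= t' < T -> Rabs (u' - u) < del -> Rabs (t' - t) < del ->
      Rabs (F u' t' - F u t) < eps.

Lemma C2_const T c u t : C2 T (fun _ _ => c) u t.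
Proof. intros e He; exists 1; split; [lra|]; intros; rewrite Rminus_diag, Rabs_R0; lra. Qed.

Lemma C2_u T u t : C2 T (fun u _ => u) u t.
Proof. intros e He; exists e; split; [lra|]; intros; auto. Qed.

Lemma C2_t T u t : C2 T (fun _ t => t) u t.
Proof. intros e He; exists e; split; [lra|]; intros; auto. Qed.

Lemma C2_plus T F1 F2 u t : C2 T F1 u t -> C2 T F2 u t -> C2 T (fun u t => F1 u t + F2 u t) u t.
Proof.
  intros H1 H2 e He. destruct (H1 (e/2) ltac:(lra)) as [d1 [Hd1 K1]].
  destruct (H2 (e/2) ltac:(lra)) as [d2 [Hd2 K2]].
  exists (Rmin d1 d2); split; [apply Rmin_pos; lra|]. intros u' t' Ht Hu Htt.
  assert (Rabs (u'-u) < d1 /\ Rabs (t'-t) < d1 /\ Rabs (u'-u) < d2 /\ Rabs (t'-t) < d2) as (?&?&?&?).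
  { generalize (Rmin_l d1 d2) (Rmin_r d1 d2); lra. }
  specialize (K1 u' t' Ht ltac:(auto) ltac:(auto)). specialize (K2 u' t' Ht ltac:(auto) ltac:(auto)).
  replace (F1 u' t' + F2 u' t' - (F1 u t + F2 u t)) with ((F1 u' t' - F1 u t) + (F2 u' t' - F2 u t)) by ring.
  eapply Rle_lt_trans; [apply Rabs_triang|]. lra.
Qed.

Lemma C2_comp1 T (f : R -> R) F u t : cnt1 f (F u t) -> C2 T F u t -> C2 T (fun u t => f (F u t)) u t.
Proof.
  intros Hf HF e He. destruct (Hf e He) as [d1 [Hd1 K1]].
  destruct (HF d1 Hd1) as [d2 [Hd2 K2]]. exists d2; split; [auto|].
  intros u' t' Ht Hu Htt. apply K1. auto.
Qed.

Lemma C2_mult T F1 F2 u t : C2 T F1 u t -> C2 T F2 u t -> C2 T (fun u t => F1 u t * F2 u t) u t.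
Proof.
  intros H1 H2 e He.
  set (a := F1 u t). set (b := F2 u t).
  set (e1 := Rmin 1 (e / (2 * (Rabs b + 1)))).
  set (e2 := e / (2 * (Rabs a + 2))).
  assert (He1 : 0 < e1). { unfold e1. apply Rmin_pos; [lra|]. apply Rdiv_lt_0_compat; [lra|]. generalize (Rabs_pos b); lra. }
  assert (He2 : 0 < e2). { unfold e2. apply Rdiv_lt_0_compat; [lra|]. generalize (Rabs_pos a); lra. }
  destruct (H1 e1 He1) as [d1 [Hd1 K1]]. destruct (H2 e2 He2) as [d2 [Hd2 K2]].
  exists (Rmin d1 d2); split; [apply Rmin_pos; lra|]. intros u' t' Ht Hu Htt.
  assert (Rabs (u'-u) < d1 /\ Rabs (t'-t) < d1 /\ Rabs (u'-u) < d2 /\ Rabs (t'-t) < d2) as (?&?&?&?).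
  { generalize (Rmin_l d1 d2) (Rmin_r d1 d2); lra. }
  specialize (K1 u' t' Ht ltac:(auto) ltac:(auto)). specialize (K2 u' t' Ht ltac:(auto) ltac:(auto)).
  fold a b in K1, K2.
  replace (F1 u' t' * F2 u' t' - a * b) with ((F1 u' t' - a) * b + F1 u' t' * (F2 u' t' - b)) by ring.
  eapply Rle_lt_trans; [apply Rabs_triang|]. rewrite !Rabs_mult.
  assert (HA : Rabs (F1 u' t') <= Rabs a + 1).
  { replace (F1 u' t') with (a + (F1 u' t' - a)) by ring.
    eapply Rle_trans; [apply Rabs_triang|]. assert (e1 <= 1) by apply Rmin_l. lra. }
  assert (X1 : Rabs (F1 u' t' - a) * Rabs b <= e/2 * (Rabs b / (Rabs b + 1))).
  { assert (e1 <= e / (2 * (Rabs b + 1))) by apply Rmin_r.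
    apply Rle_trans with (e / (2 * (Rabs b + 1)) * Rabs b).
    - apply Rmult_le_compat_r; [apply Rabs_pos| lra].
    - right. field. generalize (Rabs_pos b); lra. }
  assert (X2 : Rabs b / (Rabs b + 1) <= 1).
  { apply Rmult_le_reg_r with (Rabs b + 1). generalize (Rabs_pos b); lra.
    unfold Rdiv. rewrite Rmult_assoc, Rinv_l by (generalize (Rabs_pos b); lra). lra. }
  assert (X3 : Rabs (F1 u' t') * Rabs (F2 u' t' - b) <= (Rabs a + 2) * e2).
  { apply Rmult_le_compat; try apply Rabs_pos; lra. }
  assert (X4 : (Rabs a + 2) * e2 = e/2). { unfold e2. field. generalize (Rabs_pos a); lra. }
  assert (X5 : e/2 * (Rabs b / (Rabs b + 1)) <= e/2) by (apply Rle_trans with (e/2 * 1); [apply Rmult_le_compat_l; lra| lra]).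
  assert (Rabs (F1 u' t') * Rabs (F2 u' t' - b) < (Rabs a + 2) * e2 \/ True) by auto.
  assert (Rabs (F1 u' t') * Rabs (F2 u' t' - b) < e/2 \/ Rabs (F1 u' t' - a) * Rabs b < e/2).
  { destruct (Req_dec (Rabs (F2 u' t' - b)) 0) as [Z|Z].
    - left. rewrite Z, Rmult_0_r. lra.
    - left. apply Rle_lt_trans with ((Rabs a + 1) * Rabs (F2 u' t' - b)).
      + apply Rmult_le_compat_r; [apply Rabs_pos| lra].
      + apply Rlt_le_trans with ((Rabs a + 2) * Rabs (F2 u' t' - b)).
        * apply Rmult_lt_compat_r; [generalize (Rabs_pos (F2 u' t' - b)); lra| lra].
        * apply Rle_trans with ((Rabs a + 2) * e2); [apply Rmult_le_compat_l; [generalize (Rabs_pos a); lra| lra]| lra]. }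
  lra.
Qed.

Lemma C2_minus T F1 F2 u t : C2 T F1 u t -> C2 T F2 u t -> C2 T (fun u t => F1 u t - F2 u t) u t.
Proof.
  intros H1 H2. apply (C2_plus T F1 (fun u t => - F2 u t)); auto.
  apply (C2_comp1 T Ropp F2). 2: auto. intros e He; exists e; split; auto. intros y Hy.
  replace (- y - - F2 u t) with (-(y - F2 u t)) by ring. rewrite Rabs_Ropp; auto.
Qed.

Lemma C2_subst T (psi F : R -> R -> R) r t :
  C2 T psi r t -> C2 T F (psi r t) t -> C2 T (fun r t => F (psi r t) t) r t.
Proof.
  intros Hp HF e He. destruct (HF e He) as [d1 [Hd1 K1]].
  destruct (Hp d1 Hd1) as [d2 [Hd2 K2]]. exists (Rmin d1 d2); split; [apply Rmin_pos; lra|].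
  intros u' t' Ht Hu Htt. generalize (Rmin_l d1 d2) (Rmin_r d1 d2); intros.
  apply K1; auto; [apply K2|]; lra.
Qed.

Lemma C2_ext T F1 F2 u t : (forall u t, F1 u t = F2 u t) -> C2 T F1 u t -> C2 T F2 u t.
Proof. intros E H e He. destruct (H e He) as [d [Hd K]]. exists d; split; auto. intros. rewrite <- !E; auto. Qed.

Lemma C2_u1 T f u t : cnt1 f u -> C2 T (fun u _ => f u) u t.
Proof. intro H. apply (C2_comp1 T f (fun u _ => u)); auto. apply C2_u. Qed.

Lemma C2_t1 T f u t : cnt1 f t -> C2 T (fun _ t => f t) u t.
Proof. intro H. apply (C2_comp1 T f (fun _ t => t)); auto. apply C2_t. Qed.

Lemma C2_inv T F u t : F u t <> 0 -> C2 T F u t -> C2 T (fun u t => / F u t) u t.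
Proof. intros. apply (C2_comp1 T Rinv F); auto. apply cnt1_inv; auto. Qed.
Open Scope R_scope.

Lemma Rpower_pos x a : 0 < Rpower x a.
Proof. unfold Rpower. apply exp_pos. Qed.

Lemma rpow_pos x a : 0 < x -> rpow x a = Rpower x a.
Proof. intro H. unfold rpow. destruct (Rlt_dec 0 x); [auto| lra]. Qed.

Lemma rpow_nonpos x a : x <= 0 -> rpow x a = 0.
Proof. intro H. unfold rpow. destruct (Rlt_dec 0 x); [lra| auto]. Qed.

Lemma rpow_ge0 x a : 0 <= rpow x a.
Proof. unfold rpow. destruct (Rlt_dec 0 x); [left; apply Rpower_pos| lra]. Qed.

Lemma rpow_gt0 x a : 0 < x -> 0 < rpow x a.
Proof. intro. rewrite rpow_pos; auto. apply Rpower_pos. Qed.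

Lemma Rpower_1base a : Rpower 1 a = 1.
Proof. unfold Rpower. rewrite ln_1, Rmult_0_r. apply exp_0. Qed.

Lemma Rpower_le1 x a : 0 < x <= 1 -> 0 <= a -> Rpower x a <= 1.
Proof. intros. rewrite <- (Rpower_1base a). apply Rle_Rpower_l; lra. Qed.

Lemma Rpower_ge1 x a : 0 < x <= 1 -> a <= 0 -> 1 <= Rpower x a.
Proof.
  intros. replace a with (- (- a)) by ring. rewrite Rpower_Ropp.
  assert (Rpower x (-a) <= 1) by (apply Rpower_le1; lra).
  assert (0 < Rpower x (-a)) by apply Rpower_pos.
  rewrite <- Rinv_1. apply Rinv_le_contravar; lra.
Qed.

Lemma Rpower_anti x y a : 0 < x <= y -> a <= 0 -> Rpower y a <= Rpower x a.
Proof.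
  intros. replace a with (- (- a)) by ring. rewrite (Rpower_Ropp x (-a)), (Rpower_Ropp y (-a)).
  assert (Rpower x (-a) <= Rpower y (-a)) by (apply Rle_Rpower_l; lra).
  assert (0 < Rpower x (-a)) by apply Rpower_pos.
  apply Rinv_le_contravar; lra.
Qed.

Lemma rpow_mono x y a : 0 <= x <= y -> 0 <= a -> rpow x a <= rpow y a.
Proof.
  intros. destruct (Rlt_dec 0 x).
  - rewrite !rpow_pos by lra. apply Rle_Rpower_l; lra.
  - rewrite (rpow_nonpos x) by lra. apply rpow_ge0.
Qed.

Lemma Rpower_minus1 x a : 0 < x -> Rpower x (a - 1) = Rpower x a / x.
Proof.
  intro. unfold Rminus. rewrite Rpower_plus, Rpower_Ropp, Rpower_1; auto.
Qed.

Lemma cnt1_Rpower x a : 0 < x -> cnt1 (fun y => Rpower y a) x.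
Proof. intro. apply (cnt1_of_derive _ x (a * Rpower x (a - 1))). apply derivable_pt_lim_power; auto. Qed.

Lemma cnt1_local f g x : (exists del, 0 < del /\ forall y, Rabs (y - x) < del -> f y = g y) ->
  cnt1 f x -> cnt1 g x.
Proof.
  intros [del [Hd E]] H e He. destruct (H e He) as [d [Hd' K]].
  exists (Rmin d del); split; [apply Rmin_pos; lra|]. intros y Hy.
  generalize (Rmin_l d del) (Rmin_r d del); intros.
  rewrite <- (E y), <- (E x) by (try rewrite Rminus_diag, Rabs_R0; lra). apply K; lra.
Qed.

Lemma cnt1_rpow_pos x a : 0 < x -> cnt1 (fun y => rpow y a) x.
Proof.
  intro Hx. apply cnt1_local with (fun y => Rpower y a).
  - exists x; split; auto. intros y Hy. apply Rabs_def2 in Hy. rewrite rpow_pos; auto. lra.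
  - apply cnt1_Rpower; auto.
Qed.

Lemma cnt1_rpow x a : 0 < a -> cnt1 (fun y => rpow y a) x.
Proof.
  intro Ha. destruct (Rlt_le_dec 0 x) as [Hx|Hx]. apply cnt1_rpow_pos; auto.
  destruct (Rlt_le_dec x 0) as [Hx'|Hx'].
  - intros e He. exists (-x); split; [lra|]. intros y Hy. apply Rabs_def2 in Hy.
    rewrite !rpow_nonpos by lra. rewrite Rminus_diag, Rabs_R0; auto.
  - assert (x = 0) by lra. subst x. intros e He.
    exists (Rpower e (/ a)); split; [apply Rpower_pos|]. intros y Hy.
    rewrite (rpow_nonpos 0) by lra. rewrite Rminus_0_r in *.
    rewrite Rabs_pos_eq by apply rpow_ge0.
    destruct (Rlt_le_dec 0 y).
    + rewrite rpow_pos by auto. rewrite Rabs_pos_eq in Hy by lra.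
      apply Rlt_le_trans with (Rpower (Rpower e (/ a)) a).
      * apply Rlt_Rpower_l; auto.
      * rewrite Rpower_mult, Rinv_l, Rpower_1; lra.
    + rewrite rpow_nonpos; auto.
Qed.

Lemma derive_Rpower_lin k s a : 0 < 1 - k * s ->
  derivable_pt_lim (fun s => Rpower (1 - k * s) a) s (a * Rpower (1 - k * s) (a - 1) * (- k)).
Proof.
  intro H.
  apply (derivable_pt_lim_comp (fun s => 1 - k * s) (fun y => Rpower y a) s (-k)).
  - apply derive_unique_eq with (0 - (k * 1)).
    apply derivable_pt_lim_minus. apply derivable_pt_lim_const.
    apply derivable_pt_lim_scal. apply derivable_pt_lim_id. ring.
  - apply derivable_pt_lim_power; auto.
Qed.

Lemma sumR_ext d f g : (forall i, (i < d)%nat -> f i = g i) -> sumR d f = sumR d g.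
Proof. induction d; simpl; intros; auto. rewrite IHd by (intros; apply H; lia). rewrite H by lia. auto. Qed.

Lemma sumR_scal d c f : sumR d (fun i => c * f i) = c * sumR d f.
Proof. induction d; simpl. ring. rewrite IHd. ring. Qed.

Lemma sumR_plus d f g : sumR d (fun i => f i + g i) = sumR d f + sumR d g.
Proof. induction d; simpl. ring. rewrite IHd. ring. Qed.

Lemma sumR_nonneg d f : (forall i, (i < d)%nat -> 0 <= f i) -> 0 <= sumR d f.
Proof. induction d; simpl; intros. lra. assert (0 <= f d) by (apply H; lia). assert (0 <= sumR d f) by (apply IHd; intros; apply H; lia). lra. Qed.

Lemma sumR_term d f i : (forall j, (j < d)%nat -> 0 <= f j) -> (i < d)%nat -> f i <= sumR d f.
Proof.
  induction d; simpl; intros Hf Hi. lia.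
  destruct (Nat.eq_dec i d) as [->|Hne].
  - assert (0 <= sumR d f) by (apply sumR_nonneg; intros; apply Hf; lia). lra.
  - assert (f i <= sumR d f) by (apply IHd; [intros; apply Hf; lia| lia]). assert (0 <= f d) by (apply Hf; lia). lra.
Qed.

Lemma sumR_zero d f : (forall i, (i < d)%nat -> f i = 0) -> sumR d f = 0.
Proof. intros. rewrite (sumR_ext d f (fun _ => 0)) by auto. induction d; simpl; auto. rewrite IHd; intros; try lra. apply H; lia. Qed.

Lemma dot_nonneg d x : 0 <= dot d x x.
Proof. unfold dot. apply sumR_nonneg. intros. apply Rle_0_sqr. Qed.

Lemma normd_nonneg d x : 0 <= normd d x.
Proof. unfold normd. apply sqrt_pos. Qed.

Lemma normd_sq d x : normd d x * normd d x = dot d x x.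
Proof. unfold normd. apply sqrt_sqrt, dot_nonneg. Qed.

Lemma upd_sq d x i h : (i < d)%nat ->
  dot d (upd x i h) (upd x i h) = dot d x x + 2 * h * x i + h * h.
Proof.
  unfold dot. induction d; intros Hi; simpl. lia.
  destruct (Nat.eq_dec i d) as [->|Hne].
  - rewrite (sumR_ext d (fun i0 => upd x d h i0 * upd x d h i0) (fun i0 => x i0 * x i0)).
    + unfold upd. rewrite Nat.eqb_refl. ring.
    + intros j Hj. unfold upd. destruct (Nat.eqb_spec j d); [lia| auto].
  - rewrite IHd by lia. replace (upd x i h d) with (x d) by (unfold upd; destruct (Nat.eqb_spec d i); [lia| auto]). ring.
Qed.

Lemma coord_le d x i : (i < d)%nat -> Rabs (x i) <= normd d x.
Proof.
  intros Hi. unfold normd. rewrite <- sqrt_Rsqr_abs. apply sqrt_le_1_alt.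
  unfold Rsqr, dot. apply (sumR_term d (fun j => x j * x j)); auto. intros; apply Rle_0_sqr.
Qed.

Lemma normd_zero d x i : normd d x = 0 -> (i < d)%nat -> x i = 0.
Proof. intros H Hi. generalize (coord_le d x i Hi). rewrite H. intro. generalize (Rabs_pos (x i)); intro.
  destruct (Req_dec (x i) 0); auto. assert (0 < Rabs (x i)) by (apply Rabs_pos_lt; auto). lra. Qed.

Lemma normd_upd0 d x i h : normd d x = 0 -> (i < d)%nat -> normd d (upd x i h) = Rabs h.
Proof.
  intros H Hi. unfold normd. rewrite upd_sq by auto.
  assert (dot d x x = 0) by (rewrite <- normd_sq, H; ring). rewrite H0, (normd_zero d x i H Hi).
  replace (0 + 2 * h * 0 + h * h) with (Rsqr h) by (unfold Rsqr; ring). apply sqrt_Rsqr_abs.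
Qed.

Lemma normd_vscal d c x : 0 <= c -> normd d (vscal c x) = c * normd d x.
Proof.
  intros Hc. unfold normd, dot, vscal.
  rewrite (sumR_ext d _ (fun i => (c * c) * (x i * x i))) by (intros; ring).
  rewrite sumR_scal, sqrt_mult_alt by (apply Rle_0_sqr). rewrite sqrt_square; auto.
Qed.

Lemma dot_quad d a b l : dot d (fun i => a i - l * b i) (fun i => a i - l * b i)
  = dot d a a - 2 * l * dot d a b + l * l * dot d b b.
Proof. unfold dot. induction d; simpl. ring. rewrite IHd. ring. Qed.

Lemma dot_sym d a b : dot d a b = dot d b a.
Proof. unfold dot. apply sumR_ext. intros; ring. Qed.

Lemma CS d a b : dot d a b * dot d a b <= dot d a a * dot d b b.
Proof.
  set (A := dot d a a). set (B := dot d b b). set (S := dot d a b).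
  assert (Q : forall l, 0 <= A - 2 * l * S + l * l * B).
  { intro l. unfold A, B, S. rewrite <- dot_quad. apply dot_nonneg. }
  assert (HA : 0 <= A) by apply dot_nonneg. assert (HB : 0 <= B) by apply dot_nonneg.
  destruct (Req_dec B 0) as [Z|Z].
  - destruct (Req_dec S 0) as [Z'|Z']. rewrite Z', Z. lra.
    exfalso. specialize (Q ((A + 1) / (2 * S))). rewrite Z in Q.
    replace (A - 2 * ((A + 1) / (2 * S)) * S + (A + 1) / (2 * S) * ((A + 1) / (2 * S)) * 0) with (-1) in Q by (field; auto).
    lra.
  - specialize (Q (S / B)).
    replace (A - 2 * (S / B) * S + S / B * (S / B) * B) with ((A * B - S * S) / B) in Q by (field; auto).
    assert (0 <= A * B - S * S).
    { destruct (Rle_lt_dec 0 (A * B - S * S)); auto. exfalso.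
      assert ((A * B - S * S) / B < 0). { unfold Rdiv. apply Rmult_neg_pos; auto. apply Rinv_0_lt_compat; lra. }
      lra. }
    lra.
Qed.

Lemma dot_le d a b : dot d a b <= normd d a * normd d b.
Proof.
  unfold normd. rewrite <- sqrt_mult_alt by apply dot_nonneg.
  apply Rle_trans with (Rabs (dot d a b)). apply Rle_abs.
  rewrite <- sqrt_Rsqr_abs. apply sqrt_le_1_alt. apply CS.
Qed.

Lemma normd_triang d a b : normd d (fun i => a i + b i) <= normd d a + normd d b.
Proof.
  assert (E : dot d (fun i => a i + b i) (fun i => a i + b i) = dot d a a + 2 * dot d a b + dot d b b).
  { unfold dot. induction d; simpl. ring. rewrite IHd. ring. }
  generalize (dot_le d a b) (normd_nonneg d a) (normd_nonneg d b) (normd_sq d a) (normd_sq d b); intros.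
  unfold normd at 1. rewrite <- (sqrt_square (normd d a + normd d b)) by lra.
  apply sqrt_le_1_alt. rewrite E. nra.
Qed.

Lemma normd_sub_sym d x y : normd d (vsub y x) = normd d (vsub x y).
Proof. unfold normd, dot, vsub. f_equal. apply sumR_ext. intros; ring. Qed.

Lemma normd_lip d x y : Rabs (normd d y - normd d x) <= normd d (vsub y x).
Proof.
  assert (E1 : normd d y <= normd d x + normd d (vsub y x)).
  { rewrite <- (normd_triang d x (vsub y x)). unfold normd, dot, vsub. right. f_equal. apply sumR_ext. intros; ring. }
  assert (E2 : normd d x <= normd d y + normd d (vsub y x)).
  { rewrite normd_sub_sym. rewrite <- (normd_triang d y (vsub x y)). unfold normd, dot, vsub. right. f_equal. apply sumR_ext. intros; ring. }
  apply Rabs_le. lra.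
Qed.

Lemma vsub_coord d x y i : (i < d)%nat -> Rabs (y i - x i) <= normd d (vsub y x).
Proof. intros. apply (coord_le d (vsub y x) i); auto. Qed.

Lemma normd_vsub_self d x : normd d (vsub x x) = 0.
Proof. unfold normd, dot, vsub. rewrite sumR_zero. apply sqrt_0. intros; ring. Qed.

Lemma cs_of_C2 d T F x t : C2 T F (normd d x) t -> cont_strip d T (fun y s => F (normd d y) s) x t.
Proof.
  intros H e He. destruct (H e He) as [del [Hd K]]. exists del; split; auto.
  intros y s Hs Hy Ht. apply K; auto. eapply Rle_lt_trans. apply normd_lip. auto.
Qed.

Lemma cs_coord d T x t i : (i < d)%nat -> cont_strip d T (fun y _ => y i) x t.
Proof. intros Hi e He. exists e; split; auto. intros y s Hs Hy Ht. eapply Rle_lt_trans. apply vsub_coord; eauto. auto. Qed.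

Lemma cs_comp1 d T (f : R -> R) F x t : cnt1 f (F x t) -> cont_strip d T F x t -> cont_strip d T (fun y s => f (F y s)) x t.
Proof.
  intros Hf HF e He. destruct (Hf e He) as [d1 [Hd1 K1]]. destruct (HF d1 Hd1) as [d2 [Hd2 K2]].
  exists d2; split; [auto|]. intros. apply K1. auto.
Qed.

Lemma cs_mult d T F1 F2 x t : cont_strip d T F1 x t -> cont_strip d T F2 x t ->
  cont_strip d T (fun y s => F1 y s * F2 y s) x t.
Proof.
  intros H1 H2.
  intros e He.
  set (a := F1 x t). set (b := F2 x t).
  set (e1 := Rmin 1 (e / (2 * (Rabs b + 1)))).
  set (e2 := e / (2 * (Rabs a + 2))).
  assert (He1 : 0 < e1). { unfold e1. apply Rmin_pos; [lra|]. apply Rdiv_lt_0_compat; [lra|]. generalize (Rabs_pos b); lra. }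
  assert (He2 : 0 < e2). { unfold e2. apply Rdiv_lt_0_compat; [lra|]. generalize (Rabs_pos a); lra. }
  destruct (H1 e1 He1) as [d1 [Hd1 K1]]. destruct (H2 e2 He2) as [d2 [Hd2 K2]].
  exists (Rmin d1 d2); split; [apply Rmin_pos; lra|]. intros y s Hs Hy Ht.
  generalize (Rmin_l d1 d2) (Rmin_r d1 d2); intros.
  specialize (K1 y s Hs ltac:(lra) ltac:(lra)). specialize (K2 y s Hs ltac:(lra) ltac:(lra)).
  fold a b in K1, K2.
  replace (F1 y s * F2 y s - a * b) with ((F1 y s - a) * b + F1 y s * (F2 y s - b)) by ring.
  eapply Rle_lt_trans; [apply Rabs_triang|]. rewrite !Rabs_mult.
  assert (HA : Rabs (F1 y s) <= Rabs a + 1).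
  { replace (F1 y s) with (a + (F1 y s - a)) by ring.
    eapply Rle_trans; [apply Rabs_triang|]. assert (e1 <= 1) by apply Rmin_l. lra. }
  assert (X1 : Rabs (F1 y s - a) * Rabs b <= e / 2).
  { assert (e1 <= e / (2 * (Rabs b + 1))) by apply Rmin_r.
    apply Rle_trans with (e / (2 * (Rabs b + 1)) * (Rabs b + 1)).
    - apply Rmult_le_compat; try apply Rabs_pos; lra.
    - right. field. generalize (Rabs_pos b); lra. }
  assert (X3 : Rabs (F1 y s) * Rabs (F2 y s - b) < e / 2).
  { apply Rle_lt_trans with ((Rabs a + 1) * Rabs (F2 y s - b)).
    apply Rmult_le_compat_r; [apply Rabs_pos| lra].
    apply Rle_lt_trans with ((Rabs a + 1) * e2).
    apply Rmult_le_compat_l; [generalize (Rabs_pos a); lra| lra].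
    unfold e2. apply Rlt_le_trans with ((Rabs a + 2) * (e / (2 * (Rabs a + 2)))).
    apply Rmult_lt_compat_r. apply Rdiv_lt_0_compat; generalize (Rabs_pos a); lra. lra.
    right. field. generalize (Rabs_pos a); lra. }
  lra.
Qed.

Lemma cs_local d T F1 F2 x t : (exists eta, 0 < eta /\ forall y s, normd d (vsub y x) < eta -> F1 y s = F2 y s) ->
  cont_strip d T F2 x t -> cont_strip d T F1 x t.
Proof.
  intros [eta [Heta E]] H e He. destruct (H e He) as [del [Hd K]].
  exists (Rmin del eta); split. apply Rmin_pos; lra. intros y s Hs Hy Ht.
  generalize (Rmin_l del eta) (Rmin_r del eta); intros.
  rewrite (E y s) by lra. rewrite (E x t) by (rewrite normd_vsub_self; lra). apply K; auto; lra.
Qed.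

Lemma pt_of_cnt1 f x : cnt1 f x -> continuity_pt f x.
Proof.
  intros H e He. destruct (H e He) as [d [Hd K]]. exists d; split; [lra|].
  intros y [_ Hy]. apply K. exact Hy.
Qed.

Lemma cnt1_of_C2 T F u t : 0 <= t < T -> C2 T F u t -> cnt1 (fun u => F u t) u.
Proof.
  intros Ht H e He. destruct (H e He) as [d [Hd K]]. exists d; split; auto.
  intros y Hy. apply K; auto. rewrite Rminus_diag, Rabs_R0; auto.
Qed.

Section OneD.
Variables (gam dd Mf : R) (G G' : R -> R).
Hypothesis Hgam : 0 < gam.
Hypothesis Hdd : 1 <= dd.
Hypothesis HMf : 0 < Mf.
Hypothesis HGd : forall u, derivable_pt_lim G u (G' u).
Hypothesis HG'c : forall u, cnt1 G' u.
Hypothesis HGnn : forall u, 0 <= G u.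
Hypothesis HGle : forall u, G u <= Mf.
Hypothesis HG0 : G 0 = Mf.
Hypothesis HGabs : forall u, G u = G (Rabs u).
Hypothesis HGmono : forall u v, 0 <= u <= v -> G v <= G u.

Definition cc := gam * dd.
Definition pp := (1 + gam) / (gam * dd).
Definition HM := Rpower Mf gam.
Definition TT := / (cc * HM).
Definition HH u := rpow (G u) gam.
Definition AA u t := 1 - cc * t * HH u.
Definition a0 t := 1 - cc * t * HM.
Definition Phi u t := u * Rpower (AA u t) pp.
Definition EE u t := G u * Rpower (AA u t) (-(1/gam)).

Lemma cc_pos : 0 < cc. Proof. unfold cc. nra. Qed.
Lemma pp_pos : 0 < pp. Proof. unfold pp. apply Rdiv_lt_0_compat; nra. Qed.
Lemma HM_pos : 0 < HM. Proof. apply Rpower_pos. Qed.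
Lemma TT_pos : 0 < TT. Proof. unfold TT. apply Rinv_0_lt_compat. generalize cc_pos HM_pos; nra. Qed.
Lemma cTH : cc * TT * HM = 1.
Proof. unfold TT. field. generalize cc_pos HM_pos; lra. Qed.
Lemma ppcc : pp * cc = 1 + gam.
Proof. unfold pp, cc. field. lra. Qed.

Lemma HH_bounds u : 0 <= HH u <= HM.
Proof.
  unfold HH. split; [apply rpow_ge0|]. unfold HM. rewrite <- (rpow_pos Mf gam HMf).
  apply rpow_mono; auto. lra.
Qed.

Lemma G_cnt u : cnt1 G u. Proof. apply (cnt1_of_derive G u (G' u)); auto. Qed.

Lemma HH_cnt u : cnt1 HH u.
Proof.
  intros e He. destruct (cnt1_rpow (G u) gam Hgam e He) as [d [Hd K]].
  destruct (G_cnt u d Hd) as [d2 [Hd2 K2]]. exists d2; split; auto.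
  intros y Hy. apply K. auto.
Qed.

Lemma a0_pos t : t < TT -> 0 < a0 t.
Proof.
  intro. unfold a0. generalize cTH cc_pos HM_pos; intros.
  assert (cc * t * HM < cc * TT * HM).
  { apply Rmult_lt_compat_r; auto. apply Rmult_lt_compat_l; auto. } lra.
Qed.

Lemma AA_bounds u t : 0 <= t -> a0 t <= AA u t <= 1.
Proof.
  intros. unfold AA, a0. generalize (HH_bounds u) cc_pos; intros. split.
  - assert (cc * t * HH u <= cc * t * HM). { apply Rmult_le_compat_l; [nra| lra]. } lra.
  - assert (0 <= cc * t * HH u) by (apply Rmult_le_pos; nra). lra.
Qed.

Lemma AA_pos u t : 0 <= t < TT -> 0 < AA u t.
Proof. intros. generalize (AA_bounds u t) (a0_pos t); lra. Qed.

Lemma a0_anti t s : t <= s -> a0 s <= a0 t.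
Proof. intros. unfold a0. generalize cc_pos HM_pos; intros. assert (cc * t * HM <= cc * s * HM).
  { apply Rmult_le_compat_r; [lra|]. apply Rmult_le_compat_l; lra. } lra. Qed.

Lemma HH_abs_mono u v : Rabs u <= Rabs v -> HH v <= HH u.
Proof.
  intros. unfold HH. rewrite (HGabs u), (HGabs v). apply rpow_mono; [|lra].
  split; [auto|]. apply HGmono. split; [apply Rabs_pos| auto].
Qed.

Lemma AA_abs_mono u v t : 0 <= t -> Rabs u <= Rabs v -> AA u t <= AA v t.
Proof.
  intros. unfold AA. generalize (HH_abs_mono u v H0) cc_pos; intros.
  assert (cc * t * HH v <= cc * t * HH u) by (apply Rmult_le_compat_l; nra). lra.
Qed.

Definition mm t := Rpower (a0 t) pp.

Lemma mm_pos t : 0 < mm t. Proof. apply Rpower_pos. Qed.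

Lemma P_bounds u t : 0 <= t < TT -> mm t <= Rpower (AA u t) pp <= 1.
Proof.
  intros. generalize (AA_bounds u t) (a0_pos t) pp_pos; intros. split.
  - apply Rle_Rpower_l; lra.
  - apply Rpower_le1; lra.
Qed.

Lemma Phi_mono u v t : 0 <= t < TT -> u < v -> (v - u) * mm t <= Phi v t - Phi u t.
Proof.
  intros Ht Huv. unfold Phi.
  generalize (P_bounds u t Ht) (P_bounds v t Ht); intros [Pu1 Pu2] [Pv1 Pv2].
  set (Pu := Rpower (AA u t) pp) in *. set (Pv := Rpower (AA v t) pp) in *.
  destruct (Rle_lt_dec 0 u) as [Hu|Hu].
  - assert (Pu <= Pv).
    { apply Rle_Rpower_l; [generalize pp_pos; lra|]. split; [apply AA_pos; auto|].
      apply AA_abs_mono; [lra|]. rewrite !Rabs_pos_eq; lra. }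
    nra.
  - destruct (Rle_lt_dec v 0) as [Hv|Hv].
    + assert (Pv <= Pu).
      { apply Rle_Rpower_l; [generalize pp_pos; lra|]. split; [apply AA_pos; auto|].
        apply AA_abs_mono; [lra|]. rewrite !Rabs_left1; lra. }
      nra.
    + nra.
Qed.

Lemma Phi_lip u v t : 0 <= t < TT -> Rabs (u - v) * mm t <= Rabs (Phi u t - Phi v t).
Proof.
  intros Ht. generalize (mm_pos t); intro.
  destruct (Rtotal_order u v) as [Hq|[Hq|Hq]].
  - generalize (Phi_mono u v t Ht Hq); intro.
    rewrite Rabs_left by lra. rewrite (Rabs_left1 (Phi u t - Phi v t)) by nra. nra.
  - subst. rewrite !Rminus_diag, Rabs_R0. lra.
  - generalize (Phi_mono v u t Ht Hq); intro.
    rewrite Rabs_pos_eq by lra. rewrite (Rabs_pos_eq (Phi u t - Phi v t)) by nra. nra.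
Qed.

Lemma Phi_inj u v t : 0 <= t < TT -> Phi u t = Phi v t -> u = v.
Proof.
  intros Ht E. generalize (Phi_lip u v t Ht) (mm_pos t). rewrite E, Rminus_diag, Rabs_R0. intros.
  destruct (Req_dec u v); auto. assert (0 < Rabs (u - v)) by (apply Rabs_pos_lt; lra). nra.
Qed.

Lemma AA_C2 u t : C2 TT AA u t.
Proof.
  unfold AA. apply C2_minus. apply C2_const.
  apply C2_mult. apply C2_mult. apply C2_const. apply C2_t. apply C2_u1, HH_cnt.
Qed.

Lemma RpA_C2 a u t : 0 <= t < TT -> C2 TT (fun u t => Rpower (AA u t) a) u t.
Proof. intros. apply (C2_comp1 TT (fun y => Rpower y a) AA). apply cnt1_Rpower, AA_pos; auto. apply AA_C2. Qed.

Lemma Phi_C2 u t : 0 <= t < TT -> C2 TT Phi u t.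
Proof. intros. unfold Phi. apply C2_mult. apply C2_u. apply RpA_C2; auto. Qed.

Lemma EE_C2 u t : 0 <= t < TT -> C2 TT EE u t.
Proof. intros. unfold EE. apply C2_mult. apply C2_u1, G_cnt. apply RpA_C2; auto. Qed.

Lemma Phi_exists r t : 0 <= t < TT -> exists u, Phi u t = r.
Proof.
  intros Ht. set (m := mm t). assert (Hm : 0 < m) by apply mm_pos.
  set (b := Rabs r / m).
  assert (Hb : 0 <= b) by (unfold b; apply Rmult_le_pos; [apply Rabs_pos| left; apply Rinv_0_lt_compat; auto]).
  assert (Hbm : b * m = Rabs r) by (unfold b; field; lra).
  assert (P0 : Phi 0 t = 0) by (unfold Phi; ring).
  assert (Hup : Rabs r <= Phi b t).
  { destruct (Req_dec b 0) as [Z|Z]. rewrite Z, P0 in *. lra.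
    generalize (Phi_mono 0 b t Ht ltac:(lra)). rewrite P0. fold m. nra. }
  assert (Hlo : Phi (-b) t <= - Rabs r).
  { destruct (Req_dec b 0) as [Z|Z]. rewrite Z, Ropp_0, P0 in *. lra.
    generalize (Phi_mono (-b) 0 t Ht ltac:(lra)). rewrite P0. fold m. nra. }
  assert (Hc : continuity (fun u => Phi u t - r)).
  { intro x. apply pt_of_cnt1. apply (cnt1_of_C2 TT (fun u t => Phi u t - r) x t Ht).
    apply C2_minus. apply Phi_C2; auto. apply C2_const. }
  destruct (IVT_cor (fun u => Phi u t - r) (-b) b Hc ltac:(lra)) as [z [_ Hz]].
  - simpl. generalize (Rabs_pos r) (Rle_abs r) (Rle_abs (-r)). rewrite Rabs_Ropp. intros. nra.
  - exists z. simpl in Hz. lra.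
Qed.

Definition psi r t := epsilon (inhabits 0) (fun u => Phi u t = r).

Lemma psi_spec r t : 0 <= t < TT -> Phi (psi r t) t = r.
Proof. intro Ht. unfold psi. apply epsilon_spec. apply Phi_exists; auto. Qed.

Lemma psi_Phi u t : 0 <= t < TT -> psi (Phi u t) t = u.
Proof. intro Ht. apply (Phi_inj _ _ t Ht). apply psi_spec; auto. Qed.

Lemma psi_C2 r t : 0 <= t < TT -> C2 TT psi r t.
Proof.
  intros Ht e He.
  set (t1 := (t + TT) / 2). set (m1 := mm t1).
  assert (Hm1 : 0 < m1) by apply mm_pos.
  set (u := psi r t).
  destruct (Phi_C2 u t Ht (e * m1 / 2) ltac:(nra)) as [d1 [Hd1 K1]].
  exists (Rmin (Rmin d1 (e * m1 / 2)) ((TT - t) / 2)). split.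
  { repeat apply Rmin_pos; nra. }
  intros r' t' Ht' Hr Htt.
  generalize (Rmin_l (Rmin d1 (e * m1 / 2)) ((TT - t) / 2)) (Rmin_r (Rmin d1 (e * m1 / 2)) ((TT - t) / 2))
    (Rmin_l d1 (e * m1 / 2)) (Rmin_r d1 (e * m1 / 2)); intros.
  assert (Ht1 : t' <= t1). { unfold t1. apply Rabs_def2 in Htt. lra. }
  assert (Hmm : m1 <= mm t').
  { unfold m1, mm. apply Rle_Rpower_l. generalize pp_pos; lra. split. apply a0_pos. unfold t1; lra.
    apply a0_anti; auto. }
  generalize (Phi_lip (psi r' t') u t' Ht'). rewrite psi_spec by auto. intro L.
  specialize (K1 u t' Ht' ltac:(rewrite Rminus_diag, Rabs_R0; lra) ltac:(lra)).
  assert (Rabs (r' - Phi u t') < e * m1).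
  { replace (r' - Phi u t') with ((r' - r) - (Phi u t' - Phi u t)).
    2:{ unfold u. rewrite psi_spec by auto. ring. }
    eapply Rle_lt_trans. apply Rabs_triang. rewrite Rabs_Ropp. lra. }
  assert (Rabs (psi r' t' - u) * m1 < e * m1).
  { eapply Rle_lt_trans; [|eauto]. eapply Rle_trans; [|eauto]. apply Rmult_le_compat_l; auto. apply Rabs_pos. }
  apply Rmult_lt_reg_r with m1; auto.
Qed.


Lemma G'_zero u : G u = 0 -> G' u = 0.
Proof.
  intro Z. apply Rle_antisym.
  - apply (derive_sign_left_ge G u (G' u) 1); auto. lra. intros h _. rewrite Z; auto.
  - apply (derive_sign_right_ge G u (G' u) 1); auto. lra. intros h _. rewrite Z; auto.
Qed.

Lemma G'_0 : G' 0 = 0.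
Proof.
  apply Rle_antisym.
  - apply (derive_sign_right_le G 0 (G' 0) 1); auto. lra. intros h Hh.
    apply HGmono. lra.
  - apply (derive_sign_left_le G 0 (G' 0) 1); auto. lra. intros h Hh.
    rewrite (HGabs (0 - h)). replace (0 - h) with (- h) by ring. rewrite Rabs_Ropp, Rabs_pos_eq by lra.
    apply HGmono. lra.
Qed.

Lemma uG' u : u * G' u <= 0.
Proof.
  destruct (Rtotal_order u 0) as [Hu|[Hu|Hu]].
  - assert (0 <= G' u).
    { apply (derive_sign_right_ge G u (G' u) (-u)); auto. lra. intros h Hh.
      rewrite (HGabs u), (HGabs (u + h)). apply HGmono.
      rewrite !Rabs_left by lra. split; [apply Ropp_0_ge_le_contravar| ]; lra. }
    nra.
  - subst; lra.
  - assert (G' u <= 0).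
    { apply (derive_sign_right_le G u (G' u) 1); auto. lra. intros h Hh. apply HGmono. lra. }
    nra.
Qed.

Lemma derive_HH u : 0 < G u -> derivable_pt_lim HH u (gam * rpow (G u) (gam - 1) * G' u).
Proof.
  intro Hp. rewrite rpow_pos by auto.
  apply derive_local with (fun v => Rpower (G v) gam).
  - destruct (G_cnt u (G u) Hp) as [d [Hd K]]. exists d; split; auto. intros y Hy.
    specialize (K y Hy). apply Rabs_def2 in K. unfold HH. rewrite rpow_pos; auto. lra.
  - apply derive_unique_eq with (gam * Rpower (G u) (gam - 1) * G' u); [|ring].
    apply derive_unique_eq with ((gam * Rpower (G u) (gam - 1)) * G' u); auto.
    apply (derivable_pt_lim_comp G (fun y => Rpower y gam) u (G' u)); auto.
    apply derivable_pt_lim_power; auto.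
Qed.

Lemma derive_RpA u t q : 0 <= t < TT -> 0 < G u ->
  derivable_pt_lim (fun v => Rpower (AA v t) q) u
    (q * Rpower (AA u t) (q - 1) * (- (cc * t) * (gam * rpow (G u) (gam - 1) * G' u))).
Proof.
  intros Ht Hp.
  apply (derivable_pt_lim_comp (fun v => AA v t) (fun y => Rpower y q) u).
  - unfold AA. apply derive_unique_eq with (0 - cc * t * (gam * rpow (G u) (gam - 1) * G' u)); [|ring].
    apply derivable_pt_lim_minus. apply derivable_pt_lim_const.
    apply derivable_pt_lim_scal. apply derive_HH; auto.
  - apply derivable_pt_lim_power. apply AA_pos; auto.
Qed.

Definition F1 u t := G' u * Rpower (AA u t) (-(1/gam)) * (1 + cc * t * HH u / AA u t).
Definition W u t := Rpower (AA u t) pp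
   - u * pp * cc * t * gam * rpow (G u) (gam - 1) * G' u * Rpower (AA u t) (pp - 1).

Lemma W_lb u t : 0 <= t < TT -> mm t <= Rpower (AA u t) pp <= W u t.
Proof.
  intros Ht. split. apply P_bounds; auto. unfold W.
  assert (0 <= pp * cc * t * gam * rpow (G u) (gam - 1) * Rpower (AA u t) (pp - 1)).
  { generalize pp_pos cc_pos (rpow_ge0 (G u) (gam - 1)) (Rpower_pos (AA u t) (pp - 1)); intros.
    assert (0 <= pp * cc) by nra. assert (0 <= pp * cc * t) by nra.
    assert (0 <= pp * cc * t * gam) by nra. assert (0 <= pp * cc * t * gam * rpow (G u) (gam - 1)) by nra.
    nra. }
  generalize (uG' u). intro.
  set (X := pp * cc * t * gam * rpow (G u) (gam - 1) * Rpower (AA u t) (pp - 1)) in *.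
  assert (0 <= - (u * G' u) * X) by (apply Rmult_le_pos; lra).
  replace (u * pp * cc * t * gam * rpow (G u) (gam - 1) * G' u * Rpower (AA u t) (pp - 1)) with (u * G' u * X) by (unfold X; ring).
  lra.
Qed.

Lemma W_pos u t : 0 <= t < TT -> 0 < W u t.
Proof. intros. generalize (W_lb u t H) (mm_pos t); lra. Qed.

Lemma derive_EE u t : 0 <= t < TT -> derivable_pt_lim (fun v => EE v t) u (F1 u t).
Proof.
  intros Ht. destruct (Req_dec (G u) 0) as [Z|Z].
  - assert (F1 u t = 0) by (unfold F1; rewrite G'_zero; auto; ring). rewrite H.
    set (K0 := Rpower (a0 t) (-(1/gam))).
    assert (HK0 : 0 < K0) by apply Rpower_pos.
    intros e He. destruct (HGd u (e / K0) ltac:(apply Rdiv_lt_0_compat; auto)) as [d Hd].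
    exists d. intros h Hh0 Hh. specialize (Hd h Hh0 Hh). rewrite G'_zero, Z, Rminus_0_r in Hd by auto.
    unfold EE. rewrite Z, Rmult_0_l, Rminus_0_r, Rminus_0_r.
    assert (Hb : Rpower (AA (u + h) t) (- (1 / gam)) <= K0).
    { apply Rpower_anti. split. apply a0_pos; tauto. apply AA_bounds; tauto.
      assert (0 < 1/gam) by (apply Rdiv_lt_0_compat; lra). lra. }
    generalize (Rpower_pos (AA (u + h) t) (- (1 / gam))); intro.
    replace (G (u + h) * Rpower (AA (u + h) t) (- (1 / gam)) / h)
      with (G (u + h) / h * Rpower (AA (u + h) t) (- (1 / gam))) by (field; auto).
    rewrite Rabs_mult, (Rabs_pos_eq (Rpower _ _)) by lra.
    apply Rle_lt_trans with (Rabs (G (u + h) / h) * K0). apply Rmult_le_compat_l; auto. apply Rabs_pos.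
    apply Rmult_lt_reg_r with (/ K0). apply Rinv_0_lt_compat; auto.
    rewrite Rmult_assoc, Rinv_r by lra. rewrite Rminus_0_r in Hd. unfold Rdiv in Hd. lra.
  - assert (Hp : 0 < G u) by (generalize (HGnn u); lra).
    unfold EE.
    apply derive_ext with (fun v => G v * Rpower (AA v t) (- (1 / gam))); [auto|].
    apply derive_unique_eq with
      (G' u * Rpower (AA u t) (- (1 / gam)) + G u * ((- (1 / gam)) * Rpower (AA u t) (- (1 / gam) - 1)
        * (- (cc * t) * (gam * rpow (G u) (gam - 1) * G' u)))).
    + apply (derivable_pt_lim_mult G (fun v => Rpower (AA v t) (- (1 / gam))) u); auto.
      apply derive_RpA; auto.
    + unfold F1, HH. assert (HA : 0 < AA u t) by (apply AA_pos; auto).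
      rewrite Rpower_minus1 by auto. rewrite !rpow_pos by auto.
      rewrite Rpower_minus1 by auto. field. split; lra.
Qed.

Lemma derive_Phi u t : 0 <= t < TT -> 0 < G u -> derivable_pt_lim (fun v => Phi v t) u (W u t).
Proof.
  intros Ht Hp. unfold Phi.
  apply derive_unique_eq with
    (1 * Rpower (AA u t) pp + u * (pp * Rpower (AA u t) (pp - 1) * (- (cc * t) * (gam * rpow (G u) (gam - 1) * G' u)))).
  + apply (derivable_pt_lim_mult (fun v => v) (fun v => Rpower (AA v t) pp) u).
    apply derivable_pt_lim_id. apply derive_RpA; auto.
  + unfold W. ring.
Qed.

Lemma dq_lb u k t : 0 <= t < TT -> k <> 0 -> mm t <= (Phi (u + k) t - Phi u t) / k.
Proof.
  intros Ht Hk. generalize (mm_pos t); intro.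
  destruct (Rlt_dec 0 k).
  - generalize (Phi_mono u (u + k) t Ht ltac:(lra)). intro.
    apply Rmult_le_reg_r with k; auto. unfold Rdiv. rewrite Rmult_assoc, Rinv_l by lra. nra.
  - generalize (Phi_mono (u + k) u t Ht ltac:(lra)). intro.
    replace ((Phi (u + k) t - Phi u t) / k) with ((Phi u t - Phi (u + k) t) / (- k)) by (field; auto).
    apply Rmult_le_reg_r with (-k); [lra|]. unfold Rdiv. rewrite Rmult_assoc, Rinv_l by lra. nra.
Qed.

Lemma ratio_bound N D F Wv m e : 0 < m -> m <= D -> m <= Wv -> Rabs (N - F) <= e -> Rabs (D - Wv) <= e ->
  Rabs (N / D - F / Wv) <= e * (Wv + Rabs F) / (m * m).
Proof.
  intros Hm HD HW H1 H2.
  replace (N / D - F / Wv) with (((N - F) * Wv + F * (Wv - D)) / (D * Wv)) by (field; lra).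
  unfold Rdiv. rewrite Rabs_mult, Rabs_Rinv by nra. rewrite (Rabs_pos_eq (D * Wv)) by nra.
  apply Rle_trans with ((e * Wv + Rabs F * e) * / (D * Wv)).
  - apply Rmult_le_compat_r. left; apply Rinv_0_lt_compat; nra.
    eapply Rle_trans. apply Rabs_triang. rewrite !Rabs_mult, (Rabs_pos_eq Wv) by lra.
    apply Rplus_le_compat. apply Rmult_le_compat_r; lra.
    apply Rmult_le_compat_l. apply Rabs_pos. rewrite <- Rabs_Ropp. replace (- (Wv - D)) with (D - Wv) by ring. auto.
  - replace (e * Wv + Rabs F * e) with (e * (Wv + Rabs F)) by ring.
    assert (0 <= e) by (generalize (Rabs_pos (N - F)); lra).
    apply Rmult_le_compat_l. generalize (Rabs_pos F); nra.
    apply Rinv_le_contravar. nra. apply Rmult_le_compat; lra.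
Qed.

Definition RR r t := EE (psi r t) t.
Definition Rr r t := F1 (psi r t) t / W (psi r t) t.

Lemma derive_RR r t : 0 <= t < TT -> derivable_pt_lim (fun y => RR y t) r (Rr r t).
Proof.
  intros Ht. set (u := psi r t). set (m := mm t). assert (Hm : 0 < m) by apply mm_pos.
  assert (Hu : Phi u t = r) by (apply psi_spec; auto).
  assert (KEY : forall h, h <> 0 ->
     let k := psi (r + h) t - u in k <> 0 /\ Rabs k * m <= Rabs h /\
     (RR (r + h) t - RR r t) / h = ((EE (u + k) t - EE u t) / k) / ((Phi (u + k) t - Phi u t) / k)).
  { intros h Hh k. assert (Hk' : u + k = psi (r + h) t) by (unfold k; ring).
    assert (Hph : Phi (u + k) t = r + h) by (rewrite Hk'; apply psi_spec; auto).
    assert (Hk : k <> 0). { intro Z. rewrite Z, Rplus_0_r, Hu in Hph. lra. }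
    split; auto. split.
    - generalize (Phi_lip (u + k) u t Ht). rewrite Hph, Hu. replace (u + k - u) with k by ring.
      replace (r + h - r) with h by ring. auto.
    - unfold RR. rewrite <- Hk'. fold u. rewrite Hph, Hu. replace (r + h - r) with h by ring. field. split; auto. }
  intros e He.
  destruct (Req_dec (G u) 0) as [Z|Z].
  - assert (HR : Rr r t = 0) by (unfold Rr; fold u; unfold F1; rewrite G'_zero; auto; unfold Rdiv; ring).
    assert (HF : F1 u t = 0) by (unfold F1; rewrite G'_zero; auto; ring).
    destruct (derive_EE u t Ht (e * m) ltac:(nra)) as [d Hd].
    assert (Hdm : 0 < d * m) by (generalize (cond_pos d); nra).
    exists (mkposreal _ Hdm). intros h Hh0 Hh. simpl in Hh. rewrite HR, Rminus_0_r.
    destruct (KEY h Hh0) as [Hk [Hkb Heq]]. rewrite Heq.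
    set (k := psi (r + h) t - u) in *.
    assert (Hkd : Rabs k < d). { apply Rmult_lt_reg_r with m; auto. lra. }
    specialize (Hd k Hk Hkd). rewrite HF, Rminus_0_r in Hd.
    generalize (dq_lb u k t Ht Hk); fold m; intro HD.
    set (N := (EE (u + k) t - EE u t) / k) in *. set (D := (Phi (u + k) t - Phi u t) / k) in *.
    unfold Rdiv. rewrite Rabs_mult, Rabs_Rinv by lra. rewrite (Rabs_pos_eq D) by lra.
    apply Rle_lt_trans with (Rabs N * / m).
    apply Rmult_le_compat_l. apply Rabs_pos. apply Rinv_le_contravar; auto.
    apply Rmult_lt_reg_r with m; auto. rewrite Rmult_assoc, Rinv_l by lra. lra.
  - assert (Hp : 0 < G u) by (generalize (HGnn u); lra).
    set (Wv := W u t). set (Fv := F1 u t).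
    assert (HWv : m <= Wv) by (unfold Wv, m; generalize (W_lb u t Ht); lra).
    set (e1 := e * (m * m) / (2 * (Wv + Rabs Fv + 1))).
    assert (He1 : 0 < e1). { unfold e1. apply Rdiv_lt_0_compat. apply Rmult_lt_0_compat; [lra| nra]. generalize (Rabs_pos Fv); lra. }
    destruct (derive_EE u t Ht e1 He1) as [d1 Hd1].
    destruct (derive_Phi u t Ht Hp e1 He1) as [d2 Hd2].
    set (dk := Rmin d1 d2). assert (Hdk : 0 < dk) by (apply Rmin_pos; apply cond_pos).
    assert (Hdm : 0 < dk * m) by nra.
    exists (mkposreal _ Hdm). intros h Hh0 Hh. simpl in Hh.
    destruct (KEY h Hh0) as [Hk [Hkb Heq]]. rewrite Heq.
    set (k := psi (r + h) t - u) in *.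
    assert (Hkd : Rabs k < dk). { apply Rmult_lt_reg_r with m; auto. lra. }
    specialize (Hd1 k Hk ltac:(generalize (Rmin_l d1 d2); fold dk; lra)).
    specialize (Hd2 k Hk ltac:(generalize (Rmin_r d1 d2); fold dk; lra)).
    unfold Rr. fold u Wv Fv.
    eapply Rle_lt_trans. apply (ratio_bound _ _ Fv Wv m e1); auto.
    apply dq_lb; auto. left; auto. left; auto.
    generalize (Rabs_pos Fv); intro.
    replace (e1 * (Wv + Rabs Fv) / (m * m)) with (e * ((Wv + Rabs Fv) / (2 * (Wv + Rabs Fv + 1))))
      by (unfold e1; field; split; [lra|nra]).
    assert ((Wv + Rabs Fv) / (2 * (Wv + Rabs Fv + 1)) < 1).
    { apply Rmult_lt_reg_r with (2 * (Wv + Rabs Fv + 1)); [lra|].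
      unfold Rdiv; rewrite Rmult_assoc, Rinv_l by lra. lra. }
    nra.
Qed.

Lemma F1_C2 u t : 0 <= t < TT -> C2 TT F1 u t.
Proof.
  intros Ht. unfold F1. apply C2_mult. apply C2_mult. apply C2_u1; auto. apply RpA_C2; auto.
  apply C2_plus. apply C2_const. apply C2_mult. apply C2_mult. apply C2_mult. apply C2_const. apply C2_t.
  apply C2_u1, HH_cnt. apply C2_inv. generalize (AA_pos u t Ht); lra. apply AA_C2.
Qed.

Lemma W_C2 u t : 0 <= t < TT -> 0 < G u -> C2 TT W u t.
Proof.
  intros Ht Hp. unfold W. apply C2_minus. apply RpA_C2; auto.
  repeat apply C2_mult; try apply C2_const; try apply C2_u; try apply C2_t.
  - apply C2_u1. intros e He. destruct (cnt1_rpow_pos (G u) (gam - 1) Hp e He) as [d [Hd K]].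
    destruct (G_cnt u d Hd) as [d2 [Hd2 K2]]. exists d2; split; auto.
  - apply C2_u1; auto.
  - apply RpA_C2; auto.
Qed.

Definition Bd s := Rpower (a0 s) (-(1/gam)) * (1 + / a0 s) / mm s.

Lemma Rr_bound v s s1 : 0 <= s <= s1 -> s1 < TT -> Rabs (F1 v s / W v s) <= Rabs (G' v) * Bd s1.
Proof.
  intros Hs Hs1. assert (Hst : 0 <= s < TT) by lra.
  generalize (AA_bounds v s ltac:(lra)) (a0_pos s1 Hs1) (a0_anti s s1 ltac:(lra)) (HH_bounds v); intros HA Ha1 Han HHb.
  generalize (W_lb v s Hst) (mm_pos s1); intros HW Hm1.
  assert (Hmm : mm s1 <= mm s). { unfold mm. apply Rle_Rpower_l. generalize pp_pos; lra. split; lra. }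
  set (A := AA v s) in *. set (X := Rpower A (- (1 / gam))).
  assert (HX : 0 < X) by apply Rpower_pos.
  assert (HX1 : X <= Rpower (a0 s1) (- (1 / gam))).
  { apply Rpower_anti. lra. assert (0 < 1/gam) by (apply Rdiv_lt_0_compat; lra). lra. }
  set (Y := 1 + cc * s * HH v / A).
  assert (HY0 : 1 <= Y).
  { unfold Y. assert (0 <= cc * s * HH v / A). { apply Rmult_le_pos. generalize cc_pos; intro. assert (0 <= cc * s) by nra. nra.
      left; apply Rinv_0_lt_compat; lra. } lra. }
  assert (HY : Y <= 1 + / a0 s1).
  { unfold Y. apply Rplus_le_compat_l. unfold Rdiv.
    assert (cc * s * HH v <= 1).
    { rewrite <- cTH. generalize cc_pos HM_pos TT_pos; intros. apply Rmult_le_compat; try nra. }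
    apply Rle_trans with (1 * / A). apply Rmult_le_compat_r. left; apply Rinv_0_lt_compat; lra.
    auto. rewrite Rmult_1_l. apply Rinv_le_contravar; lra. }
  unfold F1. fold A X Y.
  unfold Rdiv. rewrite !Rabs_mult, Rabs_Rinv by lra. rewrite (Rabs_pos_eq X), (Rabs_pos_eq Y), (Rabs_pos_eq (W v s)) by lra.
  unfold Bd. unfold Rdiv. rewrite !Rmult_assoc. apply Rmult_le_compat_l. apply Rabs_pos.
  assert (/ W v s <= / mm s1). { apply Rinv_le_contravar; lra. }
  assert (0 < / W v s) by (apply Rinv_0_lt_compat; lra).
  apply Rmult_le_compat; try nra.
Qed.

Lemma Rr_C2 r t : 0 <= t < TT -> C2 TT Rr r t.
Proof.
  intros Ht. set (u := psi r t).
  destruct (Req_dec (G u) 0) as [Z|Z].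
  - assert (HR : Rr r t = 0) by (unfold Rr; fold u; unfold F1; rewrite G'_zero; auto; unfold Rdiv; ring).
    intros e He. set (t1 := (t + TT) / 2).
    assert (Ht1 : t1 < TT) by (unfold t1; lra).
    set (B1 := Bd t1).
    assert (HB1 : 0 < B1).
    { unfold B1, Bd. generalize (a0_pos t1 Ht1) (mm_pos t1) (Rpower_pos (a0 t1) (- (1 / gam))); intros.
      apply Rdiv_lt_0_compat; auto. apply Rmult_lt_0_compat; auto.
      generalize (Rinv_0_lt_compat _ H); lra. }
    assert (HC : C2 TT (fun r t => G' (psi r t)) r t).
    { apply (C2_subst TT psi (fun u _ => G' u)). apply psi_C2; auto. apply C2_u1; auto. }
    destruct (HC (e / B1) ltac:(apply Rdiv_lt_0_compat; auto)) as [d [Hd K]].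
    exists (Rmin d ((TT - t) / 2)); split. apply Rmin_pos; lra.
    intros r' t' Ht' Hr Htt. generalize (Rmin_l d ((TT - t) / 2)) (Rmin_r d ((TT - t) / 2)); intros.
    specialize (K r' t' Ht' ltac:(lra) ltac:(lra)). fold u in K. rewrite (G'_zero u Z) in K.
    rewrite Rminus_0_r in K. rewrite HR, Rminus_0_r.
    unfold Rr. eapply Rle_lt_trans. apply (Rr_bound _ t' t1).
    split; [lra|]. apply Rabs_def2 in Htt. unfold t1; lra. auto.
    fold B1. apply Rmult_lt_reg_r with (/ B1). apply Rinv_0_lt_compat; auto.
    rewrite Rmult_assoc, Rinv_r by lra. rewrite Rmult_1_r. exact K.
  - assert (Hp : 0 < G u) by (generalize (HGnn u); lra).
    unfold Rr. apply (C2_subst TT psi (fun u t => F1 u t / W u t)). apply psi_C2; auto.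
    fold u. apply C2_mult. apply F1_C2; auto. apply C2_inv. generalize (W_pos u t Ht); lra.
    apply W_C2; auto.
Qed.

Lemma RR_C2 r t : 0 <= t < TT -> C2 TT RR r t.
Proof. intros. unfold RR. apply (C2_subst TT psi EE). apply psi_C2; auto. apply EE_C2; auto. Qed.

Definition Et u t := G u * ((-(1/gam)) * Rpower (AA u t) (-(1/gam) - 1) * (- (cc * HH u))).
Definition Phit u t := u * (pp * Rpower (AA u t) (pp - 1) * (- (cc * HH u))).

Lemma derive_EE_t u t : 0 <= t < TT -> derivable_pt_lim (fun s => EE u s) t (Et u t).
Proof.
  intros Ht. unfold EE, Et.
  apply derive_ext with (fun s => G u * Rpower (1 - (cc * HH u) * s) (-(1/gam))).
  { intro s. unfold AA. f_equal. f_equal. ring. }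
  apply derivable_pt_lim_scal.
  replace (AA u t) with (1 - cc * HH u * t) by (unfold AA; ring).
  apply derive_Rpower_lin. generalize (AA_pos u t Ht). unfold AA. lra.
Qed.

Lemma derive_Phi_t u t : 0 <= t < TT -> derivable_pt_lim (fun s => Phi u s) t (Phit u t).
Proof.
  intros Ht. unfold Phi, Phit.
  apply derive_ext with (fun s => u * Rpower (1 - (cc * HH u) * s) pp).
  { intro s. unfold AA. f_equal. f_equal. ring. }
  apply derivable_pt_lim_scal.
  replace (AA u t) with (1 - cc * HH u * t) by (unfold AA; ring).
  apply derive_Rpower_lin. generalize (AA_pos u t Ht). unfold AA. lra.
Qed.

Definition Rt r t := Et (psi r t) t - Rr r t * Phit (psi r t) t.

Lemma MVT_abs (f f' : R -> R) a b : (forall c, derivable_pt_lim f c (f' c)) ->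
  exists xi, Rabs (xi - a) <= Rabs (b - a) /\ f b - f a = f' xi * (b - a).
Proof.
  intros Hd. destruct (Rtotal_order a b) as [Hab|[Hab|Hab]].
  - destruct (MVT_cor2 f f' a b Hab (fun c _ => Hd c)) as [xi [E Hxi]].
    exists xi. split; auto. rewrite !Rabs_pos_eq by lra. lra.
  - subst. exists b. rewrite !Rminus_diag, Rabs_R0. split; [lra| ring].
  - destruct (MVT_cor2 f f' b a Hab (fun c _ => Hd c)) as [xi [E Hxi]].
    exists xi. split. rewrite !Rabs_left by lra. lra. lra.
Qed.

Lemma derive_RR_t r t : 0 < t < TT -> derivable_pt_lim (fun s => RR r s) t (Rt r t).
Proof.
  intros Ht. assert (Ht0 : 0 <= t < TT) by lra.
  set (u := psi r t). assert (Hu : Phi u t = r) by (apply psi_spec; auto).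
  set (B := fun s => RR (Phi u s) s - RR r s).
  assert (HB : derivable_pt_lim B t (Rr r t * Phit u t)).
  { intros e He. set (Pt := Phit u t). set (Rv := Rr r t).
    set (e1 := Rmin 1 (e / (2 * (Rabs Rv + 1)))).
    assert (He1 : 0 < e1) by (apply Rmin_pos; [lra| apply Rdiv_lt_0_compat; generalize (Rabs_pos Rv); lra]).
    set (e2 := e / (2 * (Rabs Pt + 1))).
    assert (He2 : 0 < e2) by (apply Rdiv_lt_0_compat; generalize (Rabs_pos Pt); lra).
    destruct (derive_Phi_t u t Ht0 e1 He1) as [d1 Hd1].
    destruct (Rr_C2 r t Ht0 e2 He2) as [d2 [Hd2 K2]].
    assert (HPt : 0 < Rabs Pt + 2) by (generalize (Rabs_pos Pt); lra).
    set (del := Rmin (Rmin d1 (d2 / (Rabs Pt + 2))) (Rmin d2 (Rmin t (TT - t)))).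
    assert (Hdel : 0 < del).
    { unfold del. repeat apply Rmin_pos; try lra. apply cond_pos. apply Rdiv_lt_0_compat; lra. }
    exists (mkposreal _ Hdel). intros h Hh0 Hh. simpl in Hh.
    assert (Hh1 : Rabs h < d1 /\ Rabs h < d2 / (Rabs Pt + 2) /\ Rabs h < d2 /\ Rabs h < t /\ Rabs h < TT - t).
    { unfold del in Hh. generalize (Rmin_l (Rmin d1 (d2 / (Rabs Pt + 2))) (Rmin d2 (Rmin t (TT - t))))
        (Rmin_r (Rmin d1 (d2 / (Rabs Pt + 2))) (Rmin d2 (Rmin t (TT - t))))
        (Rmin_l d1 (d2 / (Rabs Pt + 2))) (Rmin_r d1 (d2 / (Rabs Pt + 2)))
        (Rmin_l d2 (Rmin t (TT - t))) (Rmin_r d2 (Rmin t (TT - t))) (Rmin_l t (TT - t)) (Rmin_r t (TT - t)).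
      lra. }
    destruct Hh1 as (Ha & Hb & Hc & Hd & He').
    assert (Hs : 0 <= t + h < TT) by (apply Rabs_def2 in Hd; apply Rabs_def2 in He'; lra).
    specialize (Hd1 h Hh0 Ha). rewrite Hu in Hd1. fold Pt in Hd1.
    set (q := Phi u (t + h)) in *. set (Q := (q - r) / h) in *.
    assert (HQ : Rabs Q <= Rabs Pt + 1).
    { replace Q with (Pt + (Q - Pt)) by ring. eapply Rle_trans. apply Rabs_triang.
      assert (e1 <= 1) by apply Rmin_l. lra. }
    destruct (MVT_abs (fun y => RR y (t + h)) (fun y => Rr y (t + h)) r q) as [xi [Hxi E]].
    { intro c0. apply derive_RR; auto. }
    assert (HB0 : B t = 0) by (unfold B; rewrite Hu; ring).
    rewrite HB0, Rminus_0_r. unfold B. fold q. rewrite E.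
    assert (Hqr : q - r = Q * h) by (unfold Q; field; auto).
    rewrite Hqr. replace (Rr xi (t + h) * (Q * h) / h) with (Rr xi (t + h) * Q) by (field; auto).
    assert (Hxr : Rabs (xi - r) < d2).
    { eapply Rle_lt_trans. apply Hxi. rewrite Hqr, Rabs_mult.
      apply Rle_lt_trans with ((Rabs Pt + 1) * Rabs h). apply Rmult_le_compat_r. apply Rabs_pos. auto.
      apply Rle_lt_trans with ((Rabs Pt + 2) * Rabs h). apply Rmult_le_compat_r. apply Rabs_pos. lra.
      apply Rmult_lt_reg_r with (/ (Rabs Pt + 2)). apply Rinv_0_lt_compat; lra.
      rewrite (Rmult_comm (Rabs Pt + 2)), Rmult_assoc, Rinv_r by lra. rewrite Rmult_1_r. exact Hb. }
    specialize (K2 xi (t + h) Hs Hxr ltac:(replace (t + h - t) with h by ring; auto)). fold Rv in K2.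
    replace (Rr xi (t + h) * Q - Rv * Pt) with ((Rr xi (t + h) - Rv) * Q + Rv * (Q - Pt)) by ring.
    eapply Rle_lt_trans. apply Rabs_triang. rewrite !Rabs_mult.
    assert (X1 : Rabs (Rr xi (t + h) - Rv) * Rabs Q <= e / 2).
    { apply Rle_trans with (e2 * (Rabs Pt + 1)).
      apply Rmult_le_compat; try apply Rabs_pos; lra.
      right. unfold e2. field. generalize (Rabs_pos Pt); lra. }
    assert (X2 : Rabs Rv * Rabs (Q - Pt) < e / 2).
    { assert (e1 <= e / (2 * (Rabs Rv + 1))) by apply Rmin_r.
      apply Rle_lt_trans with ((Rabs Rv) * (e / (2 * (Rabs Rv + 1)))).
      apply Rmult_le_compat_l. apply Rabs_pos. lra.
      apply Rlt_le_trans with ((Rabs Rv + 1) * (e / (2 * (Rabs Rv + 1)))).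
      apply Rmult_lt_compat_r. apply Rdiv_lt_0_compat; generalize (Rabs_pos Rv); lra. lra.
      right. field. generalize (Rabs_pos Rv); lra. }
    lra. }
  apply derive_local with (fun s => EE u s - B s).
  - exists (Rmin t (TT - t)); split. apply Rmin_pos; lra.
    intros s Hs. generalize (Rmin_l t (TT - t)) (Rmin_r t (TT - t)); intros. apply Rabs_def2 in Hs.
    unfold B. unfold RR at 1. rewrite psi_Phi by lra. ring.
  - unfold Rt. fold u. apply derivable_pt_lim_minus. apply derive_EE_t; auto. exact HB.
Qed.

Lemma negHH_C2 u t : C2 TT (fun u _ => - (cc * HH u)) u t.
Proof.
  apply (C2_comp1 TT Ropp (fun u _ => cc * HH u)). intros e' He'; exists e'; split; auto; intros y Hy.
  replace (- y - - (cc * HH u)) with (- (y - cc * HH u)) by ring. rewrite Rabs_Ropp; auto.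
  apply C2_mult. apply C2_const. apply C2_u1, HH_cnt.
Qed.

Lemma Rt_C2 r t : 0 <= t < TT -> C2 TT Rt r t.
Proof.
  intros Ht. unfold Rt. apply C2_minus.
  - apply (C2_subst TT psi Et). apply psi_C2; auto. unfold Et.
    apply C2_mult. apply C2_u1, G_cnt. apply C2_mult. apply C2_mult. apply C2_const.
    apply RpA_C2; auto. apply negHH_C2.
  - apply C2_mult. apply Rr_C2; auto.
    apply (C2_subst TT psi Phit). apply psi_C2; auto. unfold Phit.
    apply C2_mult. apply C2_u. apply C2_mult. apply C2_mult. apply C2_const.
    apply RpA_C2; auto. apply negHH_C2.
Qed.

Lemma Phi_0t u : Phi u 0 = u.
Proof. unfold Phi, AA. replace (1 - cc * 0 * HH u) with 1 by ring. rewrite Rpower_1base; ring. Qed.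

Lemma TT0 : 0 <= 0 < TT. Proof. generalize TT_pos; lra. Qed.

Lemma RR_init r : RR r 0 = G r.
Proof.
  unfold RR. rewrite <- (Phi_0t r) at 1. rewrite psi_Phi by apply TT0.
  unfold EE, AA. replace (1 - cc * 0 * HH r) with 1 by ring. rewrite Rpower_1base; ring.
Qed.

Lemma psi_0 t : 0 <= t < TT -> psi 0 t = 0.
Proof. intros. replace 0 with (Phi 0 t) at 1 by (unfold Phi; ring). apply psi_Phi; auto. Qed.

Lemma Rr_0 t : 0 <= t < TT -> Rr 0 t = 0.
Proof. intros. unfold Rr. rewrite psi_0 by auto. unfold F1. rewrite G'_0. unfold Rdiv; ring. Qed.

Lemma psi_nonneg r t : 0 <= t < TT -> 0 <= r -> 0 <= psi r t.
Proof.
  intros Ht Hr. destruct (Rle_lt_dec 0 (psi r t)); auto. exfalso.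
  generalize (Phi_mono (psi r t) 0 t Ht r0) (mm_pos t). rewrite psi_spec by auto.
  unfold Phi at 1. rewrite Rmult_0_l. nra.
Qed.

Lemma RR_nonneg r t : 0 <= t < TT -> 0 <= RR r t.
Proof. intros. unfold RR, EE. apply Rmult_le_pos; auto. left; apply Rpower_pos. Qed.

Lemma RR_char u t : 0 <= t < TT -> RR (Phi u t) t = EE u t.
Proof. intros. unfold RR. rewrite psi_Phi; auto. Qed.

Lemma PDE1 r t : 0 <= t < TT ->
  Rt r t - (1 + gam) * rpow (RR r t) gam * (r * Rr r t) = dd * rpow (RR r t) (1 + gam).
Proof.
  intros Ht. set (u := psi r t). assert (Hr : r = Phi u t) by (symmetry; apply psi_spec; auto).
  unfold Rt, RR. fold u. rewrite Hr at 2. unfold Phi, EE, Et, Phit.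
  assert (HA : 0 < AA u t) by (apply AA_pos; auto).
  set (A := AA u t) in *. set (X := Rpower A (- (1 / gam))). set (P := Rpower A pp).
  destruct (Req_dec (G u) 0) as [Z|Z].
  - unfold HH. rewrite Z. repeat rewrite Rmult_0_l. rewrite !(rpow_nonpos 0) by lra. ring.
  - assert (Hp : 0 < G u) by (generalize (HGnn u); lra).
    assert (HX : 0 < X) by apply Rpower_pos.
    rewrite !rpow_pos by (apply Rmult_lt_0_compat; auto).
    rewrite <- !Rpower_mult_distr by auto. unfold X. rewrite !Rpower_mult.
    replace (- (1 / gam) * gam) with (0 - 1) by (field; lra).
    replace (- (1 / gam) * (1 + gam)) with (- (1 / gam) - 1) by (field; lra).
    rewrite !Rpower_minus1 by auto. rewrite Rpower_O by auto.
    rewrite Rpower_plus, Rpower_1 by auto. unfold HH. rewrite rpow_pos by auto.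
    fold X P. generalize ppcc; intro Hpc. unfold cc in *.
    replace (pp * (P / A) * - (gam * dd * Rpower (G u) gam)) with (- ((pp * (gam * dd)) * P * Rpower (G u) gam / A)) by (field; lra). rewrite Hpc.
    field. split; lra.
Qed.

Lemma blowup1 K : exists del, 0 < del /\ forall r t, 0 <= r < del -> 0 <= t < TT -> TT - t < del ->
  K < RR r t.
Proof.
  set (K' := Rabs K + 1). assert (HK' : 0 < K') by (unfold K'; generalize (Rabs_pos K); lra).
  set (m0 := Mf * Rpower 2 (- (1 / gam))).
  assert (Hm0 : 0 < m0) by (unfold m0; apply Rmult_lt_0_compat; auto; apply Rpower_pos).
  set (al := Rmin (1/2) (Rpower (m0 / K') gam)).
  assert (Hal : 0 < al) by (unfold al; apply Rmin_pos; [lra| apply Rpower_pos]).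
  assert (Hal2 : al <= 1/2) by apply Rmin_l.
  assert (Hal3 : al <= Rpower (m0 / K') gam) by apply Rmin_r.
  generalize cc_pos HM_pos TT_pos cTH; intros Hc HMp HTp HcTH.
  assert (KEY : forall u t, 0 <= t < TT -> AA u t <= al -> K < EE u t).
  { intros u t Ht HA. assert (HA0 : 0 < AA u t) by (apply AA_pos; auto).
    assert (HHu : HM / 2 <= HH u).
    { unfold AA in HA. assert (Q1 : cc * t * HH u >= 1/2) by lra.
      assert (Q2 : cc * t * HH u <= cc * TT * HH u).
      { apply Rmult_le_compat_r. apply HH_bounds. apply Rmult_le_compat_l; lra. }
      assert (Q3 : 1/2 <= cc * TT * HH u) by lra.
      assert (Q4 : HM * (1/2) <= HM * (cc * TT * HH u)) by (apply Rmult_le_compat_l; lra).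
      replace (HM * (cc * TT * HH u)) with (cc * TT * HM * HH u) in Q4 by ring. rewrite HcTH in Q4. lra. }
    assert (HGu : m0 <= G u).
    { destruct (Rle_lt_dec m0 (G u)); auto. exfalso.
      assert (HH u < HM / 2).
      { unfold HH. destruct (Req_dec (G u) 0) as [Z|Z].
        - rewrite Z, rpow_nonpos by lra. lra.
        - rewrite rpow_pos by (generalize (HGnn u); lra).
          apply Rlt_le_trans with (Rpower m0 gam).
          + apply Rlt_Rpower_l; auto. generalize (HGnn u); lra.
          + unfold m0, HM. rewrite <- Rpower_mult_distr by (auto; apply Rpower_pos).
            rewrite Rpower_mult. replace (- (1 / gam) * gam) with (- (1)) by (field; lra).
            rewrite Rpower_Ropp, Rpower_1 by lra. lra. }
      lra. }
    unfold EE.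
    assert (Q5 : Rpower (Rpower (m0 / K') gam) (- (1 / gam)) <= Rpower (AA u t) (- (1 / gam))).
    { apply Rpower_anti. lra. assert (0 < 1 / gam) by (apply Rdiv_lt_0_compat; lra). lra. }
    rewrite Rpower_mult in Q5. replace (gam * - (1 / gam)) with (- (1)) in Q5 by (field; lra).
    rewrite Rpower_Ropp, Rpower_1 in Q5 by (apply Rdiv_lt_0_compat; auto).
    replace (/ (m0 / K')) with (K' / m0) in Q5 by (field; lra).
    assert (Q6 : m0 * (K' / m0) <= G u * Rpower (AA u t) (- (1 / gam))).
    { apply Rmult_le_compat; try lra. left; apply Rdiv_lt_0_compat; lra. }
    replace (m0 * (K' / m0)) with K' in Q6 by (field; lra).
    unfold K' in Q6. generalize (Rle_abs K); lra. }
  set (e1 := al / (2 * cc * TT)).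
  assert (He1 : 0 < e1) by (unfold e1; apply Rdiv_lt_0_compat; nra).
  destruct (HH_cnt 0 e1 He1) as [eta [Heta Keta]].
  assert (HH0 : HH 0 = HM) by (unfold HH, HM; rewrite HG0, rpow_pos; auto).
  set (Pa := Rpower al pp). assert (HPa : 0 < Pa) by apply Rpower_pos.
  exists (Rmin (Rmin (al / (2 * cc * HM)) (eta * Pa)) TT). split.
  { repeat apply Rmin_pos; try lra. apply Rdiv_lt_0_compat; nra. nra. }
  intros r t Hr Ht Htt.
  generalize (Rmin_l (Rmin (al / (2 * cc * HM)) (eta * Pa)) TT) (Rmin_r (Rmin (al / (2 * cc * HM)) (eta * Pa)) TT)
    (Rmin_l (al / (2 * cc * HM)) (eta * Pa)) (Rmin_r (al / (2 * cc * HM)) (eta * Pa)); intros.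
  set (u := psi r t). assert (Hu0 : 0 <= u) by (apply psi_nonneg; lra).
  assert (Hru : r = Phi u t) by (symmetry; apply psi_spec; auto).
  unfold RR. fold u. apply KEY; auto.
  destruct (Rlt_le_dec u eta) as [Hue|Hue].
  - specialize (Keta u ltac:(rewrite Rminus_0_r, Rabs_pos_eq; lra)). rewrite HH0 in Keta.
    apply Rabs_def2 in Keta.
    unfold AA.
    assert (HHu : HM - e1 <= HH u) by lra.
    assert (Htl : TT - al / (2 * cc * HM) <= t) by lra.
    assert (cc * (TT - al / (2 * cc * HM)) * (HM - e1) <= cc * t * HH u).
    { assert (F1' : al / (2 * cc * HM) = al * TT / 2).
      { rewrite <- (Rmult_1_r (al / (2 * cc * HM))), <- HcTH. field. lra. }
      assert (F2' : e1 = al * HM / 2).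
      { unfold e1. rewrite <- (Rmult_1_r (al / (2 * cc * TT))), <- HcTH. field. lra. }
      assert (0 <= TT - al / (2 * cc * HM)) by (rewrite F1'; nra).
      assert (0 <= HM - e1) by (rewrite F2'; nra).
      apply Rmult_le_compat; try lra. apply Rmult_le_pos; lra. apply Rmult_le_compat_l; lra. }
    assert (E : cc * (TT - al / (2 * cc * HM)) * (HM - e1)
               = 1 - al / 2 - al / 2 + cc * (al / (2 * cc * HM)) * e1).
    { unfold e1. rewrite <- HcTH. field. repeat split; lra. }
    assert (0 <= cc * (al / (2 * cc * HM)) * e1).
    { apply Rmult_le_pos; [|lra]. apply Rmult_le_pos; [lra|]. left; apply Rdiv_lt_0_compat; nra. }
    lra.
  - destruct (Rle_lt_dec (AA u t) al) as [|Hlt]; auto. exfalso.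
    assert (Pa < Rpower (AA u t) pp) by (apply Rlt_Rpower_l; [apply pp_pos| lra]).
    assert (r = u * Rpower (AA u t) pp) by (rewrite Hru; reflexivity).
    assert (eta * Pa <= u * Rpower (AA u t) pp) by (apply Rmult_le_compat; lra).
    lra.
Qed.

Variable d : nat.
Hypothesis Hddd : dd = INR d.

Definition rho x t := RR (normd d x) t.
Definition rhot x t := Rt (normd d x) t.
Definition rhox i x t := if Rlt_dec 0 (normd d x) then Rr (normd d x) t * x i / normd d x else 0.

Lemma norm_cs x t : cont_strip d TT (fun y _ => normd d y) x t.
Proof. apply (cs_of_C2 d TT (fun u _ => u)). apply C2_u. Qed.

Lemma rhox_cs i x t : (i < d)%nat -> 0 <= t < TT -> cont_strip d TT (rhox i) x t.
Proof.
  intros Hi Ht. destruct (Rlt_dec 0 (normd d x)) as [Hx|Hx].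
  - apply cs_local with (fun y s => Rr (normd d y) s * y i * / normd d y).
    + exists (normd d x / 2); split. lra. intros y s Hy. unfold rhox.
      generalize (normd_lip d x y); intro HL. assert (HL2 : Rabs (normd d y - normd d x) < normd d x / 2) by lra.
      apply Rabs_def2 in HL2.
      destruct (Rlt_dec 0 (normd d y)). reflexivity. exfalso; lra.
    + apply cs_mult. apply cs_mult. apply (cs_of_C2 d TT Rr). apply Rr_C2; auto. apply cs_coord; auto.
      apply (cs_comp1 d TT Rinv (fun y _ => normd d y)). apply cnt1_inv; lra. apply norm_cs.
  - assert (Hx0 : normd d x = 0) by (generalize (normd_nonneg d x); lra).
    intros e He. destruct (cs_of_C2 d TT Rr x t (Rr_C2 _ t Ht) e He) as [del [Hd K]].
    exists del; split; auto. intros y s Hs Hy Hts. specialize (K y s Hs Hy Hts).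
    rewrite Hx0, Rr_0 in K by auto. rewrite Rminus_0_r in K.
    unfold rhox. rewrite Hx0. destruct (Rlt_dec 0 0); [lra|]. rewrite Rminus_0_r.
    destruct (Rlt_dec 0 (normd d y)) as [Hy0|Hy0].
    + unfold Rdiv. rewrite !Rabs_mult, Rabs_Rinv by lra. rewrite (Rabs_pos_eq (normd d y)) by lra.
      apply Rle_lt_trans with (Rabs (Rr (normd d y) s)); auto.
      rewrite Rmult_assoc. rewrite <- (Rmult_1_r (Rabs (Rr (normd d y) s))) at 2.
      apply Rmult_le_compat_l. apply Rabs_pos.
      apply Rmult_le_reg_r with (normd d y); auto. rewrite Rmult_assoc, Rinv_l by lra.
      rewrite Rmult_1_l, Rmult_1_r. apply coord_le; auto.
    + rewrite Rabs_R0. lra.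
Qed.

Lemma deriv_quad a b : derivable_pt_lim (fun h => a + b * h + h * h) 0 b.
Proof.
  intros e He. exists (mkposreal e He). intros h Hh0 Hh. simpl in Hh.
  replace ((a + b * (0 + h) + (0 + h) * (0 + h) - (a + b * 0 + 0 * 0)) / h - b) with h by (field; auto). auto.
Qed.

Lemma rhox_deriv i x t : (i < d)%nat -> 0 <= t < TT ->
  derivable_pt_lim (fun h => rho (upd x i h) t) 0 (rhox i x t).
Proof.
  intros Hi Ht. destruct (Rlt_dec 0 (normd d x)) as [Hx|Hx].
  - set (N := dot d x x). assert (HN : 0 < N) by (unfold N; rewrite <- normd_sq; nra).
    apply derive_ext with (comp (fun y => RR y t) (fun h => sqrt (N + (2 * x i) * h + h * h))).
    { intro h. unfold comp, rho, normd. rewrite upd_sq by auto. fold N. f_equal. f_equal. f_equal. ring. }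
    unfold rhox. destruct (Rlt_dec 0 (normd d x)); [|lra].
    apply derive_unique_eq with (Rr (sqrt (N + 2 * x i * 0 + 0 * 0)) t * (/ (2 * sqrt (N + 2 * x i * 0 + 0 * 0)) * (2 * x i))).
    + apply (derivable_pt_lim_comp (fun h => sqrt (N + 2 * x i * h + h * h)) (fun y => RR y t)).
      * apply (derivable_pt_lim_comp (fun h => N + 2 * x i * h + h * h) sqrt). apply deriv_quad.
        apply derivable_pt_lim_sqrt. lra.
      * apply derive_RR; auto.
    + replace (N + 2 * x i * 0 + 0 * 0) with N by ring. replace (sqrt N) with (normd d x) by reflexivity.
      field. lra.
  - assert (Hx0 : normd d x = 0) by (generalize (normd_nonneg d x); lra).
    unfold rhox. destruct (Rlt_dec 0 (normd d x)); [lra|].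
    intros e He. destruct (derive_RR 0 t Ht e He) as [del Hd]. exists del. intros h Hh0 Hh.
    unfold rho. rewrite !normd_upd0 by auto. rewrite Rplus_0_l, Rabs_R0, Rminus_0_r.
    specialize (Hd (Rabs h) ltac:(apply Rabs_no_R0; auto) ltac:(rewrite Rabs_Rabsolu; auto)).
    rewrite Rr_0, Rminus_0_r, Rplus_0_l in Hd by auto.
    destruct (Rle_lt_dec 0 h) as [Hp|Hp].
    + rewrite (Rabs_pos_eq h) in * by lra. auto.
    + rewrite (Rabs_left h) in * by lra. unfold Rdiv in *. rewrite Rinv_opp, <- Ropp_mult_distr_r, Rabs_Ropp in Hd. auto.
Qed.

Lemma sum_rhox x t : sumR d (fun i => x i * rhox i x t) = normd d x * Rr (normd d x) t.
Proof.
  unfold rhox. destruct (Rlt_dec 0 (normd d x)) as [Hx|Hx].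
  - rewrite (sumR_ext d _ (fun i => (Rr (normd d x) t / normd d x) * (x i * x i))) by (intros; field; lra).
    rewrite sumR_scal. fold (dot d x x). rewrite <- normd_sq. field. lra.
  - assert (Hx0 : normd d x = 0) by (generalize (normd_nonneg d x); lra). rewrite Hx0.
    rewrite sumR_zero. ring. intros; ring.
Qed.

Lemma lifted :
  exists (rho rho_t : vec -> R -> R) (rho_x : nat -> vec -> R -> R),
    C1_strip d TT rho rho_t rho_x /\
    (forall x, rho x 0 = G (normd d x)) /\
    (forall x t, 0 < t < TT ->
       rho_t x t - (1 + gam) * rpow (rho x t) gam * sumR d (fun i => x i * rho_x i x t)
       = dd * rpow (rho x t) (1 + gam)) /\
    (forall x0 t, 0 <= t < TT ->
       rho (vscal (Rpower (AA (normd d x0) t) pp) x0) t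
       = G (normd d x0) * Rpower (AA (normd d x0) t) (- (1 / gam))) /\
    (forall K, exists delta, 0 < delta /\
       forall x t, 0 <= t < TT -> normd d x < delta -> Rabs (t - TT) < delta -> K < rho x t).
Proof.
  exists rho, rhot, rhox. split; [|split; [|split; [|split]]].
  - split; [|split].
    + intros x t Ht. split; [|split].
      * apply (cs_of_C2 d TT RR). apply RR_C2; auto.
      * apply (cs_of_C2 d TT Rt). apply Rt_C2; auto.
      * intros. apply rhox_cs; auto.
    + intros x t Ht. unfold rho, rhot. apply derive_RR_t; auto.
    + intros x t i Ht Hi. apply rhox_deriv; auto.
  - intros x. unfold rho. apply RR_init.
  - intros x t Ht. unfold rho, rhot. rewrite sum_rhox. apply PDE1. lra.
  - intros x0 t Ht. unfold rho. rewrite normd_vscal by (left; apply Rpower_pos).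
    rewrite Rmult_comm. fold (Phi (normd d x0) t). rewrite RR_char; auto.
  - intros K. destruct (blowup1 K) as [del [Hd Kb]]. exists del; split; auto.
    intros x t Ht Hx Htt. unfold rho. apply Kb; auto. split; auto. apply normd_nonneg.
    apply Rabs_def2 in Htt. lra.
Qed.
End OneD.

Lemma derive_shift f r l : derivable_pt_lim (fun h => f (r + h)) 0 l -> derivable_pt_lim f r l.
Proof.
  intros H e He. destruct (H e He) as [del K]. exists del. intros h Hh0 Hh.
  specialize (K h Hh0 Hh). rewrite Rplus_0_l, Rplus_0_r in K. auto.
Qed.

Theorem mainTheorem1 (d : nat) (gamma : R) (fI : vec -> R) (Mf : R) :
  (1 <= d)%nat -> 0 < gamma ->
  (* f_I in C^1(R^d) cap L^infty(R^d) *)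
  C1_Rd d fI ->
  (exists B, forall x, Rabs (fI x) <= B) ->
  (* nonnegative, not identically zero *)
  (forall x, 0 <= fI x) ->
  (exists x, fI x <> 0) ->
  (* radially symmetric and radially non-increasing *)
  (exists g : R -> R, (forall x, fI x = g (normd d x)) /\
     (forall r s, 0 <= r <= s -> g s <= g r)) ->
  (* Mf = max f_I *)
  (forall x, fI x <= Mf) -> (exists x, fI x = Mf) ->
  let tstar := / (gamma * INR d * rpow Mf gamma) in
  exists (rho rho_t : vec -> R -> R) (rho_x : nat -> vec -> R -> R),
    C1_strip d tstar rho rho_t rho_x /\
    (forall x, rho x 0 = fI x) /\
    (forall x t, 0 < t < tstar ->
       rho_t x t - (1 + gamma) * rpow (rho x t) gamma
                     * sumR d (fun i => x i * rho_x i x t)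
       = INR d * rpow (rho x t) (1 + gamma)) /\
    (forall x0 t, 0 <= t < tstar ->
       let a := 1 - gamma * INR d * rpow (fI x0) gamma * t in
       rho (vscal (Rpower a ((1 + gamma) / (gamma * INR d))) x0) t
       = fI x0 * Rpower a (- (1 / gamma))) /\
    (forall K, exists delta, 0 < delta /\
       forall x t, 0 <= t < tstar -> normd d x < delta -> Rabs (t - tstar) < delta ->
         K < rho x t).
Proof.
  intros Hd Hg [DF [Hcont Hder]] _ Hnn [x1 Hx1] [g [Hg1 Hg2]] HMf [xm Hxm] tstar.
  set (z := fun _ : nat => 0).
  assert (Hz : normd d z = 0).
  { unfold normd, dot. rewrite sumR_zero. apply sqrt_0. intros; unfold z; ring. }
  assert (Hd0 : (0 < d)%nat) by lia.
  assert (Nz : forall r, normd d (upd z 0 r) = Rabs r) by (intro r; apply normd_upd0; auto).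
  set (G := fun r => fI (upd z 0 r)). set (G' := fun r => DF 0%nat (upd z 0 r)).
  assert (HGg : forall r, G r = g (Rabs r)) by (intro r; unfold G; rewrite Hg1, Nz; auto).
  assert (HfG : forall x, fI x = G (normd d x)).
  { intro x. rewrite HGg, Rabs_pos_eq by apply normd_nonneg. auto. }
  assert (HMpos : 0 < Mf). { generalize (Hnn x1) (HMf x1); intros. lra. }
  assert (HG0 : G 0 = Mf).
  { apply Rle_antisym. apply HMf. rewrite <- Hxm, HGg, Rabs_R0, Hg1. apply Hg2. split. lra. apply normd_nonneg. }
  assert (HGd : forall u, derivable_pt_lim G u (G' u)).
  { intro u. apply derive_shift. destruct (Hder 0%nat Hd0 (upd z 0 u)) as [D _].
    apply derive_ext with (fun h => fI (upd (upd z 0 u) 0 h)); auto.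
    intro h. unfold G. f_equal. apply functional_extensionality. intro j. unfold upd.
    destruct (Nat.eqb j 0); auto. unfold z; ring. }
  assert (HG'c : forall u, cnt1 G' u).
  { intros u e He. destruct (Hder 0%nat Hd0 (upd z 0 u)) as [_ C]. destruct (C e He) as [del [Hdel K]].
    exists del; split; auto. intros y Hy. apply K.
    replace (vsub (upd z 0 y) (upd z 0 u)) with (upd z 0 (y - u)).
    rewrite Nz; auto. apply functional_extensionality. intro j. unfold upd, vsub, z.
    destruct (Nat.eqb j 0); ring. }
  assert (HDD : 1 <= INR d) by (apply (le_INR 1 d) in Hd; simpl in Hd; auto).
  destruct (lifted gamma (INR d) Mf G G' Hg HDD HMpos HGd HG'c
     ltac:(intro; unfold G; auto) ltac:(intro; unfold G; auto) HG0
     ltac:(intro u; rewrite !HGg, Rabs_Rabsolu; auto)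
     ltac:(intros u v Huv; rewrite !HGg, !Rabs_pos_eq by lra; apply Hg2; auto) d)
    as [rho [rt [rx [C [I [P [Ch B]]]]]]].
  assert (ET : tstar = TT gamma (INR d) Mf).
  { unfold tstar, TT, cc, HM. rewrite rpow_pos; auto. }
  rewrite ET. exists rho, rt, rx. split; [auto|split; [|split; [auto|split]]].
  - intro x. rewrite I, HfG; auto.
  - intros x0 t Ht a. specialize (Ch x0 t Ht). unfold a. rewrite HfG.
    unfold AA, HH, cc, pp in Ch.
    replace (1 - gamma * INR d * rpow (G (normd d x0)) gamma * t)
      with (1 - gamma * INR d * t * rpow (G (normd d x0)) gamma) by ring.
    exact Ch.
  - exact B.
Qed.
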